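(* For every choice of $a>0$ and $b>0$, there exist smooth vector fields $u,v$ on $S^1=\mathbb{R}/\mathbb{Z}$ such that the sectional curvature of $\mathrm{Diff}(S^1)$ endowed with the right-invariant metric given at the identity by $\langle\!\langle u,v\rangle\!\rangle_{H^1}=\int_0^1(a\,uv+b\,u_xv_x)\,dx$ is strictly negative, i.e. $S(u,v)=\langle\!\langle R(u,v)v,u\rangle\!\rangle_{H^1}<0$.
   Context: $R$ is the Riemann curvature tensor of the Levi-Civita connection of the right-invariant metric, evaluated at the identity. *)

(* Defs.v *)
From Stdlib Require Import Reals.
From Coquelicot Require Import Coquelicot.
Open Scope R_scope.

(* Smooth vector fields on S^1 = R/Z, identified with smooth 1-periodic
   functions R -> R (u(x) d/dx). *)
Definition periodic1 (f : R -> R) : Prop := forall x, f (x + 1) = f x.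
Definition smooth (f : R -> R) : Prop := forall (n : nat) (x : R), ex_derive_n f n x.
Definition vfS1 (f : R -> R) : Prop := periodic1 f /\ smooth f.

Definition H1ip (a b : R) (u v : R -> R) : R :=
  RInt (fun x => a * u x * v x + b * Derive u x * Derive v x) 0 1.

(* Lie bracket of right-invariant vector fields on Diff(S^1), evaluated at the
   identity: minus the usual vector-field bracket, i.e. u_x v - u v_x. *)
Definition brR (u v : R -> R) : R -> R :=
  fun x => Derive u x * v x - u x * Derive v x.

(* n is (the value at the identity of) the Levi-Civita covariant derivative
   nabla_{X_u} X_v of the right-invariant fields X_u, X_v: characterized by the
   Koszul formula for right-invariant fields (inner products of right-invariant
   fields are constant):
   2 <n, w> = <[u,v], w> - <[v,w], u> + <[w,u], v>  for all smooth w. *)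
Definition is_LC_nabla (a b : R) (u v n : R -> R) : Prop :=
  vfS1 n /\
  forall w, vfS1 w ->
    2 * H1ip a b n w =
      H1ip a b (brR u v) w - H1ip a b (brR v w) u + H1ip a b (brR w u) v.

(* s = S(u,v) = << R(u,v) v, u >>_{H^1}, with
   R(u,v) v = nabla_u nabla_v v - nabla_v nabla_u v - nabla_{[u,v]} v. *)
Definition sectional_curvature_is (a b : R) (u v : R -> R) (s : R) : Prop :=
  exists n1 n2 n3 n4 n5 : R -> R,
    is_LC_nabla a b v v n1 /\
    is_LC_nabla a b u n1 n2 /\
    is_LC_nabla a b u v n3 /\
    is_LC_nabla a b v n3 n4 /\
    is_LC_nabla a b (brR u v) v n5 /\
    s = H1ip a b (fun x => n2 x - n4 x - n5 x) u.

(* Main.v *)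
Require Import Defs.
From Stdlib Require Import Reals Lra Lia.
From Coquelicot Require Import Coquelicot.
Open Scope R_scope.

Lemma smooth_ex_derive f : smooth f -> forall x, ex_derive f x.
Proof. intros H x. exact (H 1%nat x). Qed.

Lemma smooth_Derive f : smooth f -> smooth (Derive f).
Proof.
  intros H n x. destruct n as [|n]; [exact I|].
  simpl. specialize (H (S (S n)) x). simpl in H.
  eapply ex_derive_ext; [|exact H].
  intros y. simpl. rewrite (Derive_n_comp f n 1). now rewrite Nat.add_comm.
Qed.

Lemma periodic_deriv f g : periodic1 f -> (forall x, is_derive f x (g x)) -> periodic1 g.
Proof.
  intros Hp Hd x.
  assert (H1 : is_derive (fun y => f (y + 1)) x (scal 1 (g (x+1)))).
  { apply (is_derive_comp f (fun y => y + 1) x (g (x+1)) 1 (Hd (x+1))).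
    auto_derive; auto; ring. }
  apply (is_derive_ext _ f) in H1; [|intros y; apply Hp].
  apply is_derive_unique in H1. rewrite (is_derive_unique _ _ _ (Hd x)) in H1.
  rewrite H1. symmetry. exact (scal_one (g (x+1))).
Qed.

Lemma cont_of_deriv (f : R -> R) (g x : R) : is_derive f x g -> continuous f x.
Proof. intros H. apply (ex_derive_continuous (K:=R_AbsRing) (V:=R_NormedModule)). eexists; exact H. Qed.

Lemma ex_RInt_of_deriv (f df : R -> R) : (forall x, is_derive f x (df x)) -> ex_RInt f 0 1.
Proof. intros H. apply (ex_RInt_continuous (V:=R_CompleteNormedModule)). intros z _. eapply cont_of_deriv; apply H. Qed.

Lemma ex_RInt_of_ex_derive (f : R -> R) : (forall x, ex_derive f x) -> ex_RInt f 0 1.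
Proof. intros H. apply (ex_RInt_continuous (V:=R_CompleteNormedModule)). intros z _.
  apply (ex_derive_continuous (K:=R_AbsRing) (V:=R_NormedModule)). apply H. Qed.

Ltac der_rw := repeat match goal with |- context [Derive (fun y => ?f y) ?x] =>
  let H := fresh in assert (H : Derive (fun y => f y) x = Derive f x) by reflexivity; rewrite H; clear H end.

Section LC.
Variables a b : R.
Variables u u1 u2 u3 v v1 v2 v3 n n1 n2 c c1 c2 : R -> R.
Hypothesis Hu : periodic1 u. Hypothesis Hv : periodic1 v. Hypothesis Hn : vfS1 n.
Hypothesis Hc : periodic1 c.
Hypothesis du : forall x, is_derive u x (u1 x).
Hypothesis du1 : forall x, is_derive u1 x (u2 x).
Hypothesis du2 : forall x, is_derive u2 x (u3 x).
Hypothesis dv : forall x, is_derive v x (v1 x).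
Hypothesis dv1 : forall x, is_derive v1 x (v2 x).
Hypothesis dv2 : forall x, is_derive v2 x (v3 x).
Hypothesis dn : forall x, is_derive n x (n1 x).
Hypothesis dn1 : forall x, is_derive n1 x (n2 x).
Hypothesis dc : forall x, is_derive c x (c1 x).
Hypothesis dc1 : forall x, is_derive c1 x (c2 x).
Hypothesis Hcb : forall x, c x = u1 x * v x - u x * v1 x.
Hypothesis cond : forall x,
  2 * (a * n x - b * n2 x) = (a * c x - b * c2 x)
   - (2 * v1 x * (a * u x - b * u2 x) + v x * (a * u1 x - b * u3 x))
   - (2 * u1 x * (a * v x - b * v2 x) + u x * (a * v1 x - b * v3 x)).

Lemma LC_ok : is_LC_nabla a b u v n.
Proof.
  split; [exact Hn|]. intros w [Hwp Hws].
  set (w1 := Derive w). set (w2 := Derive w1). set (w3 := Derive w2).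
  assert (dw : forall x, is_derive w x (w1 x)).
  { intros x. apply Derive_correct. apply smooth_ex_derive, Hws. }
  assert (dw1 : forall x, is_derive w1 x (w2 x)).
  { intros x. apply Derive_correct. apply smooth_ex_derive, smooth_Derive, Hws. }
  assert (dw2 : forall x, is_derive w2 x (w3 x)).
  { intros x. apply Derive_correct. apply smooth_ex_derive, smooth_Derive, smooth_Derive, Hws. }
  assert (Pw1 : periodic1 w1) by (apply (periodic_deriv w); auto).
  assert (Pu1 : periodic1 u1) by (apply (periodic_deriv u); auto).
  assert (Pu2 : periodic1 u2) by (apply (periodic_deriv u1); auto).
  assert (Pv1 : periodic1 v1) by (apply (periodic_deriv v); auto).
  assert (Pv2 : periodic1 v2) by (apply (periodic_deriv v1); auto).
  assert (Pn1 : periodic1 n1) by (apply (periodic_deriv n); [apply Hn|auto]).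
  assert (Pc1 : periodic1 c1) by (apply (periodic_deriv c); auto).
  set (I1 := fun x => a * n x * w x + b * n1 x * w1 x).
  set (I2 := fun x => a * c x * w x + b * c1 x * w1 x).
  set (I3 := fun x => a * (v1 x * w x - v x * w1 x) * u x + b * (v2 x * w x - v x * w2 x) * u1 x).
  set (I4 := fun x => a * (w1 x * u x - w x * u1 x) * v x + b * (w2 x * u x - w x * u2 x) * v1 x).
  assert (E1 : H1ip a b n w = RInt I1 0 1).
  { unfold H1ip. apply RInt_ext. intros x _. unfold I1.
    rewrite (is_derive_unique _ _ _ (dn x)). reflexivity. }
  assert (E2 : H1ip a b (brR u v) w = RInt I2 0 1).
  { unfold H1ip. apply RInt_ext. intros x _. unfold I2.
    assert (Hcc : brR u v = c).
    { apply FunctionalExtensionality.functional_extensionality. intros y. unfold brR.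
      rewrite Hcb, (is_derive_unique _ _ _ (du y)), (is_derive_unique _ _ _ (dv y)). reflexivity. }
    rewrite Hcc, (is_derive_unique _ _ _ (dc x)). reflexivity. }
  assert (E3 : H1ip a b (brR v w) u = RInt I3 0 1).
  { unfold H1ip. apply RInt_ext. intros x _. unfold I3.
    assert (Hd : Derive (brR v w) x = v2 x * w x - v x * w2 x).
    { apply is_derive_unique. unfold brR.
      apply (is_derive_ext (fun y => v1 y * w y - v y * w1 y)).
      { intros y. rewrite (is_derive_unique _ _ _ (dv y)). reflexivity. }
      auto_derive.
      - repeat split; eexists; eauto.
      - der_rw. rewrite !(is_derive_unique _ _ _ (dv1 x)), !(is_derive_unique _ _ _ (dw x)),
          !(is_derive_unique _ _ _ (dw1 x)), !(is_derive_unique _ _ _ (dv x)). ring. }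
    rewrite Hd, (is_derive_unique _ _ _ (du x)). unfold brR.
    rewrite (is_derive_unique _ _ _ (dv x)). reflexivity. }
  assert (E4 : H1ip a b (brR w u) v = RInt I4 0 1).
  { unfold H1ip. apply RInt_ext. intros x _. unfold I4.
    assert (Hd : Derive (brR w u) x = w2 x * u x - w x * u2 x).
    { apply is_derive_unique. unfold brR.
      apply (is_derive_ext (fun y => w1 y * u y - w y * u1 y)).
      { intros y. rewrite (is_derive_unique _ _ _ (du y)). reflexivity. }
      auto_derive.
      - repeat split; eexists; eauto.
      - der_rw. rewrite !(is_derive_unique _ _ _ (du1 x)), !(is_derive_unique _ _ _ (dw x)),
          !(is_derive_unique _ _ _ (dw1 x)), !(is_derive_unique _ _ _ (du x)). ring. }
    rewrite Hd, (is_derive_unique _ _ _ (dv x)). unfold brR.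
    rewrite (is_derive_unique _ _ _ (du x)). reflexivity. }
  rewrite E1, E2, E3, E4.
  assert (X1 : ex_RInt I1 0 1).
  { apply ex_RInt_of_ex_derive. intros x. unfold I1. auto_derive; repeat split; eexists; eauto. }
  assert (X2 : ex_RInt I2 0 1).
  { apply ex_RInt_of_ex_derive. intros x. unfold I2. auto_derive; repeat split; eexists; eauto. }
  assert (X3 : ex_RInt I3 0 1).
  { apply ex_RInt_of_ex_derive. intros x. unfold I3. auto_derive; repeat split; eexists; eauto. }
  assert (X4 : ex_RInt I4 0 1).
  { apply ex_RInt_of_ex_derive. intros x. unfold I4. auto_derive; repeat split; eexists; eauto. }
  set (Df := fun x => 2 * I1 x - I2 x + I3 x - I4 x).
  pose proof (is_RInt_minus _ _ _ _ _ _ (is_RInt_plus _ _ _ _ _ _ (is_RInt_minus _ _ _ _ _ _ (is_RInt_scal _ _ _ 2 _ (RInt_correct _ _ _ X1)) (RInt_correct _ _ _ X2)) (RInt_correct _ _ _ X3)) (RInt_correct _ _ _ X4)) as L1.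
  apply is_RInt_unique in L1.
  set (F := fun x => 2*b*n1 x*w x - b*c1 x*w x + b*(v1 x*w x - v x*w1 x)*u1 x
     - v x*w x*(a*u x - b*u2 x) + b*(u1 x*w x - u x*w1 x)*v1 x - u x*w x*(a*v x - b*v2 x)).
  assert (L2a : forall x, Rmin 0 1 <= x <= Rmax 0 1 -> is_derive F x (Df x)).
    { intros x _. unfold F. auto_derive.
      + repeat split; eexists; eauto.
      + der_rw.
        rewrite ?(is_derive_unique _ _ _ (dn x)), ?(is_derive_unique _ _ _ (dn1 x)),
          ?(is_derive_unique _ _ _ (dc x)), ?(is_derive_unique _ _ _ (dc1 x)),
          ?(is_derive_unique _ _ _ (du x)), ?(is_derive_unique _ _ _ (du1 x)),
          ?(is_derive_unique _ _ _ (du2 x)), ?(is_derive_unique _ _ _ (dv x)),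
          ?(is_derive_unique _ _ _ (dv1 x)), ?(is_derive_unique _ _ _ (dv2 x)),
          ?(is_derive_unique _ _ _ (dw x)), ?(is_derive_unique _ _ _ (dw1 x)).
        unfold Df, I1, I2, I3, I4. rewrite Hcb. specialize (cond x). rewrite Hcb in cond.
        apply Rminus_diag_uniq.
        transitivity (- w x * (2 * (a * n x - b * n2 x) - ((a * (u1 x * v x - u x * v1 x) - b * c2 x)
          - (2 * v1 x * (a * u x - b * u2 x) + v x * (a * u1 x - b * u3 x))
          - (2 * u1 x * (a * v x - b * v2 x) + u x * (a * v1 x - b * v3 x))))).
        * match goal with |- ?A = ?B => change (@eq R A B) end. ring.
        * rewrite cond. ring. }
  assert (L2b : forall x, Rmin 0 1 <= x <= Rmax 0 1 -> continuous Df x).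
  { intros x _. apply (ex_derive_continuous (K:=R_AbsRing) (V:=R_NormedModule)).
      unfold Df, I1, I2, I3, I4. auto_derive; repeat split; eexists; eauto. }
  pose proof (is_RInt_derive F Df 0 1 L2a L2b) as L2.
  assert (HF : F 1 = F 0).
  { unfold F. replace 1 with (0+1) by ring.
    rewrite Pn1, Pc1, Pv1, Pv2, Pu1, Pu2, Pw1, Hu, Hv, Hwp. reflexivity. }
  rewrite HF in L2. pose proof (is_RInt_unique _ _ _ _ L2) as U2.
  assert (HE : RInt Df 0 1 = 2 * RInt I1 0 1 - RInt I2 0 1 + RInt I3 0 1 - RInt I4 0 1).
  { eapply eq_trans; [|eapply eq_trans; [exact L1|]].
    - apply RInt_ext. intros x _. reflexivity.
    - reflexivity. }
  rewrite HE in U2. change (minus (F 0) (F 0)) with (F 0 - F 0) in U2. lra.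
Qed.
End LC.

Inductive TP (w : R) : (R -> R) -> Prop :=
| TPc k : TP w (fun _ => k)
| TPcos : TP w (fun x => cos (w * x))
| TPsin : TP w (fun x => sin (w * x))
| TPplus f g : TP w f -> TP w g -> TP w (fun x => f x + g x)
| TPmult f g : TP w f -> TP w g -> TP w (fun x => f x * g x)
| TPext f g : (forall x, f x = g x) -> TP w f -> TP w g.

Lemma TP_opp w f : TP w f -> TP w (fun x => - f x).
Proof. intros H. apply (TPext w (fun x => (fun _ => -1) x * f x)). intros; ring. apply TPmult; auto. apply TPc. Qed.
Lemma TP_minus w f g : TP w f -> TP w g -> TP w (fun x => f x - g x).
Proof. intros H1 H2. apply (TPext w (fun x => f x + (fun y => - g y) x)). intros; simpl; ring. apply TPplus; auto. apply TP_opp; auto. Qed.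
Lemma TP_pow w f n : TP w f -> TP w (fun x => f x ^ n).
Proof. intros H. induction n.
  - apply (TPext w (fun _ => 1)). intros; simpl; ring. apply TPc.
  - apply (TPext w (fun x => f x * (fun y => f y ^ n) x)). intros; simpl; ring. apply TPmult; auto. Qed.

Lemma TP_deriv w f : TP w f -> exists g, TP w g /\ forall x, is_derive f x (g x).
Proof.
  induction 1.
  - exists (fun _ => 0). split. apply TPc. intros x. auto_derive; auto.
  - exists (fun x => - w * sin (w * x)). split.
    + apply (TPext w (fun x => (fun _ => - w) x * sin (w * x))). intros; ring. apply TPmult. apply TPc. apply TPsin.
    + intros x. auto_derive; auto. ring.
  - exists (fun x => w * cos (w * x)). split.
    + apply (TPext w (fun x => (fun _ => w) x * cos (w * x))). intros; ring. apply TPmult. apply TPc. apply TPcos.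
    + intros x. auto_derive; auto. ring.
  - destruct IHTP1 as [f' [T1 D1]]. destruct IHTP2 as [g' [T2 D2]].
    exists (fun x => f' x + g' x). split. apply TPplus; auto.
    intros x. apply (is_derive_plus f g x (f' x) (g' x)); auto.
  - destruct IHTP1 as [f' [T1 D1]]. destruct IHTP2 as [g' [T2 D2]].
    exists (fun x => f' x * g x + f x * g' x). split.
    + apply TPplus; apply TPmult; auto.
    + intros x. apply (is_derive_mult f g x (f' x) (g' x)); auto. intros; apply Rmult_comm.
  - destruct IHTP as [f' [T1 D1]]. exists f'. split; auto.
    intros x. apply (is_derive_ext f g); auto.
Qed.

Lemma TP_smooth_aux w n : forall f, TP w f -> (forall x, ex_derive_n f n x) /\ TP w (Derive_n f n).
Proof.
  induction n as [|n IH]; intros f Hf.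
  - split. intros; exact I. exact Hf.
  - destruct (IH f Hf) as [_ HT]. destruct (TP_deriv w _ HT) as [g [Tg Dg]].
    split.
    + intros x. simpl. eexists. apply Dg.
    + apply (TPext w g). intros x. simpl. symmetry. apply is_derive_unique. apply Dg. exact Tg.
Qed.

Lemma TP_smooth w f : TP w f -> smooth f.
Proof. intros H n x. apply (TP_smooth_aux w n f H). Qed.

Ltac tp := match goal with
  | |- TP ?w (fun x => @?f x + @?g x) => apply (TPplus w f g); tp
  | |- TP ?w (fun x => @?f x - @?g x) => apply (TP_minus w f g); tp
  | |- TP ?w (fun x => @?f x * @?g x) => apply (TPmult w f g); tp
  | |- TP ?w (fun x => - @?f x) => apply (TP_opp w f); tp
  | |- TP ?w (fun x => @?f x ^ ?n) => apply (TP_pow w f n); tp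
  | |- TP ?w (fun x => cos (?w * x)) => apply TPcos
  | |- TP ?w (fun x => sin (?w * x)) => apply TPsin
  | |- TP ?w (fun x => ?k) => apply TPc
  end.


Section Conc.
Variables a b w al : R.
Hypothesis ha : 0 < a.
Hypothesis hb : 0 < b.
Hypothesis hw : 0 < w.
Hypothesis Hcos : forall x, cos (w * (x + 1)) = cos (w * x).
Hypothesis Hsin : forall x, sin (w * (x + 1)) = sin (w * x).
Definition em0 := / a.
Definition em1 := / (a + 1 * b * w ^ 2).
Definition em2 := / (a + 4 * b * w ^ 2).
Definition em3 := / (a + 9 * b * w ^ 2).
Definition em4 := / (a + 16 * b * w ^ 2).
Definition em5 := / (a + 25 * b * w ^ 2).
Definition em6 := / (a + 36 * b * w ^ 2).
Definition iw := / w.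
Ltac unfold_e := unfold em0, em1, em2, em3, em4, em5, em6, iw.
Ltac nz := repeat split; apply Rgt_not_eq; unfold Rgt; pose proof (pow2_ge_0 w); nra.
Ltac dtac := auto_derive; repeat split; match goal with |- ?A = ?B => change (@eq R A B) end; field.
Lemma sin2cos2 x : sin (w * x) ^ 2 + cos (w * x) ^ 2 - 1 = 0.
Proof. pose proof (sin2_cos2 (w*x)). unfold Rsqr in H. simpl. lra. Qed.
Definition fu_0 (x : R) : R := ((1)) * cos (w * x).
Definition fu_1 (x : R) : R := ((- 1) * w) * sin (w * x).
Definition fu_2 (x : R) : R := ((- 1) * w ^ 2) * cos (w * x).
Definition fu_3 (x : R) : R := ((1) * w ^ 3) * sin (w * x).
Lemma d_fu_0 x : is_derive fu_0 x (fu_1 x).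
Proof. unfold fu_0, fu_1. dtac. Qed.
Lemma d_fu_1 x : is_derive fu_1 x (fu_2 x).
Proof. unfold fu_1, fu_2. dtac. Qed.
Lemma d_fu_2 x : is_derive fu_2 x (fu_3 x).
Proof. unfold fu_2, fu_3. dtac. Qed.
Definition fv_0 (x : R) : R := ((1) * al) + ((- 1)) * sin (w * x) ^ 2 + ((1)) * cos (w * x) ^ 2.
Definition fv_1 (x : R) : R := ((- 4) * w) * cos (w * x) * sin (w * x).
Definition fv_2 (x : R) : R := ((4) * w ^ 2) * sin (w * x) ^ 2 + ((- 4) * w ^ 2) * cos (w * x) ^ 2.
Definition fv_3 (x : R) : R := ((16) * w ^ 3) * cos (w * x) * sin (w * x).
Lemma d_fv_0 x : is_derive fv_0 x (fv_1 x).
Proof. unfold fv_0, fv_1. dtac. Qed.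
Lemma d_fv_1 x : is_derive fv_1 x (fv_2 x).
Proof. unfold fv_1, fv_2. dtac. Qed.
Lemma d_fv_2 x : is_derive fv_2 x (fv_3 x).
Proof. unfold fv_2, fv_3. dtac. Qed.
Definition fn1_0 (x : R) : R := ((16) * b * w ^ 3 * al * em2 + (12) * a * w * al * em2) * cos (w * x) * sin (w * x) + ((- 48) * b * w ^ 3 * em4 + (- 12) * a * w * em4) * cos (w * x) * sin (w * x) ^ 3 + ((48) * b * w ^ 3 * em4 + (12) * a * w * em4) * cos (w * x) ^ 3 * sin (w * x).
Definition fn1_1 (x : R) : R := ((- 16) * b * w ^ 4 * al * em2 + (- 12) * a * w ^ 2 * al * em2) * sin (w * x) ^ 2 + ((48) * b * w ^ 4 * em4 + (12) * a * w ^ 2 * em4) * sin (w * x) ^ 4 + ((16) * b * w ^ 4 * al * em2 + (12) * a * w ^ 2 * al * em2) * cos (w * x) ^ 2 + ((- 288) * b * w ^ 4 * em4 + (- 72) * a * w ^ 2 * em4) * cos (w * x) ^ 2 * sin (w * x) ^ 2 + ((48) * b * w ^ 4 * em4 + (12) * a * w ^ 2 * em4) * cos (w * x) ^ 4.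
Definition fn1_2 (x : R) : R := ((- 64) * b * w ^ 5 * al * em2 + (- 48) * a * w ^ 3 * al * em2) * cos (w * x) * sin (w * x) + ((768) * b * w ^ 5 * em4 + (192) * a * w ^ 3 * em4) * cos (w * x) * sin (w * x) ^ 3 + ((- 768) * b * w ^ 5 * em4 + (- 192) * a * w ^ 3 * em4) * cos (w * x) ^ 3 * sin (w * x).
Definition fn1_3 (x : R) : R := ((64) * b * w ^ 6 * al * em2 + (48) * a * w ^ 4 * al * em2) * sin (w * x) ^ 2 + ((- 768) * b * w ^ 6 * em4 + (- 192) * a * w ^ 4 * em4) * sin (w * x) ^ 4 + ((- 64) * b * w ^ 6 * al * em2 + (- 48) * a * w ^ 4 * al * em2) * cos (w * x) ^ 2 + ((4608) * b * w ^ 6 * em4 + (1152) * a * w ^ 4 * em4) * cos (w * x) ^ 2 * sin (w * x) ^ 2 + ((- 768) * b * w ^ 6 * em4 + (- 192) * a * w ^ 4 * em4) * cos (w * x) ^ 4.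
Lemma d_fn1_0 x : is_derive fn1_0 x (fn1_1 x).
Proof. unfold fn1_0, fn1_1. dtac. Qed.
Lemma d_fn1_1 x : is_derive fn1_1 x (fn1_2 x).
Proof. unfold fn1_1, fn1_2. dtac. Qed.
Lemma d_fn1_2 x : is_derive fn1_2 x (fn1_3 x).
Proof. unfold fn1_2, fn1_3. dtac. Qed.
Definition fn3_0 (x : R) : R := ((3 / 4) * w + (- 1 / 2) * w * al + (3 / 4) * b * w ^ 3 * em1 + (1 / 2) * b * w ^ 3 * al * em1 + (3 / 4) * a * w * em1 + (3 / 2) * a * w * al * em1) * sin (w * x) + ((- 1 / 4) * w + (- 21 / 4) * b * w ^ 3 * em3 + (- 9 / 4) * a * w * em3) * sin (w * x) ^ 3 + ((3 / 4) * w + (63 / 4) * b * w ^ 3 * em3 + (27 / 4) * a * w * em3) * cos (w * x) ^ 2 * sin (w * x).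
Definition fn3_1 (x : R) : R := ((3 / 4) * w ^ 2 + (- 1 / 2) * w ^ 2 * al + (3 / 4) * b * w ^ 4 * em1 + (1 / 2) * b * w ^ 4 * al * em1 + (3 / 4) * a * w ^ 2 * em1 + (3 / 2) * a * w ^ 2 * al * em1) * cos (w * x) + ((- 9 / 4) * w ^ 2 + (- 189 / 4) * b * w ^ 4 * em3 + (- 81 / 4) * a * w ^ 2 * em3) * cos (w * x) * sin (w * x) ^ 2 + ((3 / 4) * w ^ 2 + (63 / 4) * b * w ^ 4 * em3 + (27 / 4) * a * w ^ 2 * em3) * cos (w * x) ^ 3.
Definition fn3_2 (x : R) : R := ((- 3 / 4) * w ^ 3 + (1 / 2) * w ^ 3 * al + (- 3 / 4) * b * w ^ 5 * em1 + (- 1 / 2) * b * w ^ 5 * al * em1 + (- 3 / 4) * a * w ^ 3 * em1 + (- 3 / 2) * a * w ^ 3 * al * em1) * sin (w * x) + ((9 / 4) * w ^ 3 + (189 / 4) * b * w ^ 5 * em3 + (81 / 4) * a * w ^ 3 * em3) * sin (w * x) ^ 3 + ((- 27 / 4) * w ^ 3 + (- 567 / 4) * b * w ^ 5 * em3 + (- 243 / 4) * a * w ^ 3 * em3) * cos (w * x) ^ 2 * sin (w * x).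
Definition fn3_3 (x : R) : R := ((- 3 / 4) * w ^ 4 + (1 / 2) * w ^ 4 * al + (- 3 / 4) * b * w ^ 6 * em1 + (- 1 / 2) * b * w ^ 6 * al * em1 + (- 3 / 4) * a * w ^ 4 * em1 + (- 3 / 2) * a * w ^ 4 * al * em1) * cos (w * x) + ((81 / 4) * w ^ 4 + (1701 / 4) * b * w ^ 6 * em3 + (729 / 4) * a * w ^ 4 * em3) * cos (w * x) * sin (w * x) ^ 2 + ((- 27 / 4) * w ^ 4 + (- 567 / 4) * b * w ^ 6 * em3 + (- 243 / 4) * a * w ^ 4 * em3) * cos (w * x) ^ 3.
Lemma d_fn3_0 x : is_derive fn3_0 x (fn3_1 x).
Proof. unfold fn3_0, fn3_1. dtac. Qed.
Lemma d_fn3_1 x : is_derive fn3_1 x (fn3_2 x).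
Proof. unfold fn3_1, fn3_2. dtac. Qed.
Lemma d_fn3_2 x : is_derive fn3_2 x (fn3_3 x).
Proof. unfold fn3_2, fn3_3. dtac. Qed.
Definition fn2_0 (x : R) : R := ((- 6) * b * w ^ 4 * al * em2 + (- 6) * b ^ 2 * w ^ 6 * al * em1 * em2 + (- 9 / 2) * a * w ^ 2 * al * em2 + (- 21 / 2) * a * b * w ^ 4 * al * em1 * em2 + (- 9 / 2) * a ^ 2 * w ^ 2 * al * em1 * em2) * cos (w * x) + ((45) * b * w ^ 4 * em4 + (6) * b * w ^ 4 * al * em2 + (351) * b ^ 2 * w ^ 6 * em3 * em4 + (126) * b ^ 2 * w ^ 6 * al * em2 * em3 + (45 / 4) * a * w ^ 2 * em4 + (9 / 2) * a * w ^ 2 * al * em2 + (675 / 4) * a * b * w ^ 4 * em3 * em4 + (297 / 2) * a * b * w ^ 4 * al * em2 * em3 + (81 / 4) * a ^ 2 * w ^ 2 * em3 * em4 + (81 / 2) * a ^ 2 * w ^ 2 * al * em2 * em3) * cos (w * x) * sin (w * x) ^ 2 + ((- 45) * b * w ^ 4 * em4 + (- 1575) * b ^ 2 * w ^ 6 * em4 * em5 + (- 45 / 4) * a * w ^ 2 * em4 + (- 2475 / 4) * a * b * w ^ 4 * em4 * em5 + (- 225 / 4) * a ^ 2 * w ^ 2 * em4 * em5) * cos (w * x) * sin (w * x) ^ 4 + ((- 15) * b * w ^ 4 * em4 + (- 2) * b * w ^ 4 * al * em2 + (- 117) * b ^ 2 * w ^ 6 * em3 * em4 + (- 42) * b ^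 2 * w ^ 6 * al * em2 * em3 + (- 15 / 4) * a * w ^ 2 * em4 + (- 3 / 2) * a * w ^ 2 * al * em2 + (- 225 / 4) * a * b * w ^ 4 * em3 * em4 + (- 99 / 2) * a * b * w ^ 4 * al * em2 * em3 + (- 27 / 4) * a ^ 2 * w ^ 2 * em3 * em4 + (- 27 / 2) * a ^ 2 * w ^ 2 * al * em2 * em3) * cos (w * x) ^ 3 + ((90) * b * w ^ 4 * em4 + (3150) * b ^ 2 * w ^ 6 * em4 * em5 + (45 / 2) * a * w ^ 2 * em4 + (2475 / 2) * a * b * w ^ 4 * em4 * em5 + (225 / 2) * a ^ 2 * w ^ 2 * em4 * em5) * cos (w * x) ^ 3 * sin (w * x) ^ 2 + ((- 9) * b * w ^ 4 * em4 + (- 315) * b ^ 2 * w ^ 6 * em4 * em5 + (- 9 / 4) * a * w ^ 2 * em4 + (- 495 / 4) * a * b * w ^ 4 * em4 * em5 + (- 45 / 4) * a ^ 2 * w ^ 2 * em4 * em5) * cos (w * x) ^ 5.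
Definition fn2_1 (x : R) : R := ((6) * b * w ^ 5 * al * em2 + (6) * b ^ 2 * w ^ 7 * al * em1 * em2 + (9 / 2) * a * w ^ 3 * al * em2 + (21 / 2) * a * b * w ^ 5 * al * em1 * em2 + (9 / 2) * a ^ 2 * w ^ 3 * al * em1 * em2) * sin (w * x) + ((- 45) * b * w ^ 5 * em4 + (- 6) * b * w ^ 5 * al * em2 + (- 351) * b ^ 2 * w ^ 7 * em3 * em4 + (- 126) * b ^ 2 * w ^ 7 * al * em2 * em3 + (- 45 / 4) * a * w ^ 3 * em4 + (- 9 / 2) * a * w ^ 3 * al * em2 + (- 675 / 4) * a * b * w ^ 5 * em3 * em4 + (- 297 / 2) * a * b * w ^ 5 * al * em2 * em3 + (- 81 / 4) * a ^ 2 * w ^ 3 * em3 * em4 + (- 81 / 2) * a ^ 2 * w ^ 3 * al * em2 * em3) * sin (w * x) ^ 3 + ((45) * b * w ^ 5 * em4 + (1575) * b ^ 2 * w ^ 7 * em4 * em5 + (45 / 4) * a * w ^ 3 * em4 + (2475 / 4) * a * b * w ^ 5 * em4 * em5 + (225 / 4) * a ^ 2 * w ^ 3 * em4 * em5) * sin (w * x) ^ 5 + ((135) * b * w ^ 5 * em4 + (18) * b * w ^ 5 * al * em2 + (1053) * b ^ 2 * w ^ 7 * em3 * em4 + (378) * b ^ 2 * w ^ 7 * al * em2 * em3 + (135 / 4) * a * w ^ 3 * em4 + (27 / 2) * a * w ^ 3 * al * em2 + (2025 / 4) * a * b * w ^ 5 * em3 * em4 + (891 / 2) * a * b * w ^ 5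 * al * em2 * em3 + (243 / 4) * a ^ 2 * w ^ 3 * em3 * em4 + (243 / 2) * a ^ 2 * w ^ 3 * al * em2 * em3) * cos (w * x) ^ 2 * sin (w * x) + ((- 450) * b * w ^ 5 * em4 + (- 15750) * b ^ 2 * w ^ 7 * em4 * em5 + (- 225 / 2) * a * w ^ 3 * em4 + (- 12375 / 2) * a * b * w ^ 5 * em4 * em5 + (- 1125 / 2) * a ^ 2 * w ^ 3 * em4 * em5) * cos (w * x) ^ 2 * sin (w * x) ^ 3 + ((225) * b * w ^ 5 * em4 + (7875) * b ^ 2 * w ^ 7 * em4 * em5 + (225 / 4) * a * w ^ 3 * em4 + (12375 / 4) * a * b * w ^ 5 * em4 * em5 + (1125 / 4) * a ^ 2 * w ^ 3 * em4 * em5) * cos (w * x) ^ 4 * sin (w * x).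
Definition fn2_2 (x : R) : R := ((6) * b * w ^ 6 * al * em2 + (6) * b ^ 2 * w ^ 8 * al * em1 * em2 + (9 / 2) * a * w ^ 4 * al * em2 + (21 / 2) * a * b * w ^ 6 * al * em1 * em2 + (9 / 2) * a ^ 2 * w ^ 4 * al * em1 * em2) * cos (w * x) + ((- 405) * b * w ^ 6 * em4 + (- 54) * b * w ^ 6 * al * em2 + (- 3159) * b ^ 2 * w ^ 8 * em3 * em4 + (- 1134) * b ^ 2 * w ^ 8 * al * em2 * em3 + (- 405 / 4) * a * w ^ 4 * em4 + (- 81 / 2) * a * w ^ 4 * al * em2 + (- 6075 / 4) * a * b * w ^ 6 * em3 * em4 + (- 2673 / 2) * a * b * w ^ 6 * al * em2 * em3 + (- 729 / 4) * a ^ 2 * w ^ 4 * em3 * em4 + (- 729 / 2) * a ^ 2 * w ^ 4 * al * em2 * em3) * cos (w * x) * sin (w * x) ^ 2 + ((1125) * b * w ^ 6 * em4 + (39375) * b ^ 2 * w ^ 8 * em4 * em5 + (1125 / 4) * a * w ^ 4 * em4 + (61875 / 4) * a * b * w ^ 6 * em4 * em5 + (5625 / 4) * a ^ 2 * w ^ 4 * em4 * em5) * cos (w * x) * sin (w * x) ^ 4 + ((135) * b * w ^ 6 * em4 + (18) * b * w ^ 6 * al * em2 + (1053) * b ^ 2 * w ^ 8 * em3 * em4 + (378) * b ^ 2 * w ^ 8 * al * em2 * em3 + (135 / 4) * a * w ^ 4 * em4 + (27 / 2) * a * w ^ 4 * al * em2 + (2025 / 4) * a * b * w ^ 6 * em3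 * em4 + (891 / 2) * a * b * w ^ 6 * al * em2 * em3 + (243 / 4) * a ^ 2 * w ^ 4 * em3 * em4 + (243 / 2) * a ^ 2 * w ^ 4 * al * em2 * em3) * cos (w * x) ^ 3 + ((- 2250) * b * w ^ 6 * em4 + (- 78750) * b ^ 2 * w ^ 8 * em4 * em5 + (- 1125 / 2) * a * w ^ 4 * em4 + (- 61875 / 2) * a * b * w ^ 6 * em4 * em5 + (- 5625 / 2) * a ^ 2 * w ^ 4 * em4 * em5) * cos (w * x) ^ 3 * sin (w * x) ^ 2 + ((225) * b * w ^ 6 * em4 + (7875) * b ^ 2 * w ^ 8 * em4 * em5 + (225 / 4) * a * w ^ 4 * em4 + (12375 / 4) * a * b * w ^ 6 * em4 * em5 + (1125 / 4) * a ^ 2 * w ^ 4 * em4 * em5) * cos (w * x) ^ 5.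
Lemma d_fn2_0 x : is_derive fn2_0 x (fn2_1 x).
Proof. unfold fn2_0, fn2_1. dtac. Qed.
Lemma d_fn2_1 x : is_derive fn2_1 x (fn2_2 x).
Proof. unfold fn2_1, fn2_2. dtac. Qed.
Definition fn4_0 (x : R) : R := ((- 7 / 8) * w ^ 2 + (1 / 4) * w ^ 2 * al ^ 2 + (- 105 / 16) * b * w ^ 4 * em3 + (- 7 / 16) * b * w ^ 4 * em1 + (- 3 / 2) * b * w ^ 4 * al * em1 + (- 147 / 16) * b ^ 2 * w ^ 6 * em1 * em3 + (9 / 16) * b ^ 2 * w ^ 6 * em1 ^ 2 + (- 1 / 4) * b ^ 2 * w ^ 6 * al ^ 2 * em1 ^ 2 + (- 45 / 16) * a * w ^ 2 * em3 + (- 3 / 16) * a * w ^ 2 * em1 + (- 3) * a * w ^ 2 * al * em1 + (- 63 / 8) * a * b * w ^ 4 * em1 * em3 + (9 / 8) * a * b * w ^ 4 * em1 ^ 2 + (- 3 / 2) * a * b * w ^ 4 * al ^ 2 * em1 ^ 2 + (- 27 / 16) * a ^ 2 * w ^ 2 * em1 * em3 + (9 / 16) * a ^ 2 * w ^ 2 * em1 ^ 2 + (- 9 / 4) * a ^ 2 * w ^ 2 * al ^ 2 * em1 ^ 2) * cos (w * x) + ((- 9 / 16) * w ^ 2 + (3 / 2) * w ^ 2 * al + (189 / 16) * b * w ^ 4 * em3 + (- 9 / 16) * b * w ^ 4 * em1 + (207 / 8) * b * w ^ 4 * al * em3 + (- 3 / 8) * b * w ^ 4 * al * em1 + (189 /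 16) * b ^ 2 * w ^ 6 * em1 * em3 + (1701 / 8) * b ^ 2 * w ^ 6 * al * em3 ^ 2 + (63 / 8) * b ^ 2 * w ^ 6 * al * em1 * em3 + (81 / 16) * a * w ^ 2 * em3 + (- 9 / 16) * a * w ^ 2 * em1 + (81 / 8) * a * w ^ 2 * al * em3 + (- 9 / 8) * a * w ^ 2 * al * em1 + (135 / 8) * a * b * w ^ 4 * em1 * em3 + (162) * a * b * w ^ 4 * al * em3 ^ 2 + (27) * a * b * w ^ 4 * al * em1 * em3 + (81 / 16) * a ^ 2 * w ^ 2 * em1 * em3 + (243 / 8) * a ^ 2 * w ^ 2 * al * em3 ^ 2 + (81 / 8) * a ^ 2 * w ^ 2 * al * em1 * em3) * cos (w * x) * sin (w * x) ^ 2 + ((- 5 / 16) * w ^ 2 + (- 475 / 16) * b * w ^ 4 * em5 + (- 105 / 16) * b * w ^ 4 * em3 + (- 9975 / 16) * b ^ 2 * w ^ 6 * em3 * em5 + (- 75 / 16) * a * w ^ 2 * em5 + (- 45 / 16) * a * w ^ 2 * em3 + (- 2925 / 8) * a * b * w ^ 4 * em3 * em5 + (- 675 / 16) * a ^ 2 * w ^ 2 * em3 * em5) * cos (w * x) * sin (w * x) ^ 4 + ((3 / 16) * w ^ 2 + (- 1 / 2) * w ^ 2 * al + (- 63 / 16) * b * w ^ 4 * em3 + (3 / 16) * b * w ^ 4 * em1 + (- 69 / 8) * b * w ^ 4 * al * em3 + (1 / 8) * b * w ^ 4 * al * em1 + (- 63 / 16) * b ^ 2 * w ^ 6 * em1 *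 em3 + (- 567 / 8) * b ^ 2 * w ^ 6 * al * em3 ^ 2 + (- 21 / 8) * b ^ 2 * w ^ 6 * al * em1 * em3 + (- 27 / 16) * a * w ^ 2 * em3 + (3 / 16) * a * w ^ 2 * em1 + (- 27 / 8) * a * w ^ 2 * al * em3 + (3 / 8) * a * w ^ 2 * al * em1 + (- 45 / 8) * a * b * w ^ 4 * em1 * em3 + (- 54) * a * b * w ^ 4 * al * em3 ^ 2 + (- 9) * a * b * w ^ 4 * al * em1 * em3 + (- 27 / 16) * a ^ 2 * w ^ 2 * em1 * em3 + (- 81 / 8) * a ^ 2 * w ^ 2 * al * em3 ^ 2 + (- 27 / 8) * a ^ 2 * w ^ 2 * al * em1 * em3) * cos (w * x) ^ 3 + ((5 / 8) * w ^ 2 + (475 / 8) * b * w ^ 4 * em5 + (105 / 8) * b * w ^ 4 * em3 + (9975 / 8) * b ^ 2 * w ^ 6 * em3 * em5 + (75 / 8) * a * w ^ 2 * em5 + (45 / 8) * a * w ^ 2 * em3 + (2925 / 4) * a * b * w ^ 4 * em3 * em5 + (675 / 8) * a ^ 2 * w ^ 2 * em3 * em5) * cos (w * x) ^ 3 * sin (w * x) ^ 2 + ((- 1 / 16) * w ^ 2 + (- 95 / 16) * b * w ^ 4 * em5 + (- 21 / 16) * b * w ^ 4 * em3 + (- 1995 / 16) * b ^ 2 * w ^ 6 * em3 * em5 + (- 15 / 16) * a * w ^ 2 * em5 + (- 9 / 16) * a * w ^ 2 * em3 + (- 585 / 8) * a * b * w ^ 4 * em3 * em5 + (- 135 / 16)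 * a ^ 2 * w ^ 2 * em3 * em5) * cos (w * x) ^ 5.
Definition fn4_1 (x : R) : R := ((7 / 8) * w ^ 3 + (- 1 / 4) * w ^ 3 * al ^ 2 + (105 / 16) * b * w ^ 5 * em3 + (7 / 16) * b * w ^ 5 * em1 + (3 / 2) * b * w ^ 5 * al * em1 + (147 / 16) * b ^ 2 * w ^ 7 * em1 * em3 + (- 9 / 16) * b ^ 2 * w ^ 7 * em1 ^ 2 + (1 / 4) * b ^ 2 * w ^ 7 * al ^ 2 * em1 ^ 2 + (45 / 16) * a * w ^ 3 * em3 + (3 / 16) * a * w ^ 3 * em1 + (3) * a * w ^ 3 * al * em1 + (63 / 8) * a * b * w ^ 5 * em1 * em3 + (- 9 / 8) * a * b * w ^ 5 * em1 ^ 2 + (3 / 2) * a * b * w ^ 5 * al ^ 2 * em1 ^ 2 + (27 / 16) * a ^ 2 * w ^ 3 * em1 * em3 + (- 9 / 16) * a ^ 2 * w ^ 3 * em1 ^ 2 + (9 / 4) * a ^ 2 * w ^ 3 * al ^ 2 * em1 ^ 2) * sin (w * x) + ((9 / 16) * w ^ 3 + (- 3 / 2) * w ^ 3 * al + (- 189 / 16) * b * w ^ 5 * em3 + (9 / 16) * b * w ^ 5 * em1 + (- 207 / 8) * b * w ^ 5 * al * em3 + (3 / 8) * b * w ^ 5 * al * em1 + (- 189 / 16) * b ^ 2 * w ^ 7 * em1 * em3 + (- 1701 / 8) * b ^ 2 * w ^ 7 * al * em3 ^ 2 + (- 63 / 8) * b ^ 2 * w ^ 7 * al * em1 * em3 +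 (- 81 / 16) * a * w ^ 3 * em3 + (9 / 16) * a * w ^ 3 * em1 + (- 81 / 8) * a * w ^ 3 * al * em3 + (9 / 8) * a * w ^ 3 * al * em1 + (- 135 / 8) * a * b * w ^ 5 * em1 * em3 + (- 162) * a * b * w ^ 5 * al * em3 ^ 2 + (- 27) * a * b * w ^ 5 * al * em1 * em3 + (- 81 / 16) * a ^ 2 * w ^ 3 * em1 * em3 + (- 243 / 8) * a ^ 2 * w ^ 3 * al * em3 ^ 2 + (- 81 / 8) * a ^ 2 * w ^ 3 * al * em1 * em3) * sin (w * x) ^ 3 + ((5 / 16) * w ^ 3 + (475 / 16) * b * w ^ 5 * em5 + (105 / 16) * b * w ^ 5 * em3 + (9975 / 16) * b ^ 2 * w ^ 7 * em3 * em5 + (75 / 16) * a * w ^ 3 * em5 + (45 / 16) * a * w ^ 3 * em3 + (2925 / 8) * a * b * w ^ 5 * em3 * em5 + (675 / 16) * a ^ 2 * w ^ 3 * em3 * em5) * sin (w * x) ^ 5 + ((- 27 / 16) * w ^ 3 + (9 / 2) * w ^ 3 * al + (567 / 16) * b * w ^ 5 * em3 + (- 27 / 16) * b * w ^ 5 * em1 + (621 / 8) * b * w ^ 5 * al * em3 + (- 9 / 8) * b * w ^ 5 * al * em1 + (567 / 16) * b ^ 2 * w ^ 7 * em1 * em3 + (5103 / 8) * b ^ 2 * w ^ 7 * al * em3 ^ 2 + (189 / 8) * b ^ 2 * w ^ 7 * al * em1 * em3 + (243 / 16) * a * w ^ 3 * em3 + (- 27 / 16) * a * w ^ 3 * em1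 + (243 / 8) * a * w ^ 3 * al * em3 + (- 27 / 8) * a * w ^ 3 * al * em1 + (405 / 8) * a * b * w ^ 5 * em1 * em3 + (486) * a * b * w ^ 5 * al * em3 ^ 2 + (81) * a * b * w ^ 5 * al * em1 * em3 + (243 / 16) * a ^ 2 * w ^ 3 * em1 * em3 + (729 / 8) * a ^ 2 * w ^ 3 * al * em3 ^ 2 + (243 / 8) * a ^ 2 * w ^ 3 * al * em1 * em3) * cos (w * x) ^ 2 * sin (w * x) + ((- 25 / 8) * w ^ 3 + (- 2375 / 8) * b * w ^ 5 * em5 + (- 525 / 8) * b * w ^ 5 * em3 + (- 49875 / 8) * b ^ 2 * w ^ 7 * em3 * em5 + (- 375 / 8) * a * w ^ 3 * em5 + (- 225 / 8) * a * w ^ 3 * em3 + (- 14625 / 4) * a * b * w ^ 5 * em3 * em5 + (- 3375 / 8) * a ^ 2 * w ^ 3 * em3 * em5) * cos (w * x) ^ 2 * sin (w * x) ^ 3 + ((25 / 16) * w ^ 3 + (2375 / 16) * b * w ^ 5 * em5 + (525 / 16) * b * w ^ 5 * em3 + (49875 / 16) * b ^ 2 * w ^ 7 * em3 * em5 + (375 / 16) * a * w ^ 3 * em5 + (225 / 16) * a * w ^ 3 * em3 + (14625 / 8) * a * b * w ^ 5 * em3 * em5 + (3375 / 16) * a ^ 2 * w ^ 3 * em3 * em5) * cos (w * x) ^ 4 * sin (w * x).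
Definition fn4_2 (x : R) : R := ((7 / 8) * w ^ 4 + (- 1 / 4) * w ^ 4 * al ^ 2 + (105 / 16) * b * w ^ 6 * em3 + (7 / 16) * b * w ^ 6 * em1 + (3 / 2) * b * w ^ 6 * al * em1 + (147 / 16) * b ^ 2 * w ^ 8 * em1 * em3 + (- 9 / 16) * b ^ 2 * w ^ 8 * em1 ^ 2 + (1 / 4) * b ^ 2 * w ^ 8 * al ^ 2 * em1 ^ 2 + (45 / 16) * a * w ^ 4 * em3 + (3 / 16) * a * w ^ 4 * em1 + (3) * a * w ^ 4 * al * em1 + (63 / 8) * a * b * w ^ 6 * em1 * em3 + (- 9 / 8) * a * b * w ^ 6 * em1 ^ 2 + (3 / 2) * a * b * w ^ 6 * al ^ 2 * em1 ^ 2 + (27 / 16) * a ^ 2 * w ^ 4 * em1 * em3 + (- 9 / 16) * a ^ 2 * w ^ 4 * em1 ^ 2 + (9 / 4) * a ^ 2 * w ^ 4 * al ^ 2 * em1 ^ 2) * cos (w * x) + ((81 / 16) * w ^ 4 + (- 27 / 2) * w ^ 4 * al + (- 1701 / 16) * b * w ^ 6 * em3 + (81 / 16) * b * w ^ 6 * em1 + (- 1863 / 8) * b * w ^ 6 * al * em3 + (27 / 8) * b * w ^ 6 * al * em1 + (- 1701 / 16) * b ^ 2 * w ^ 8 * em1 * em3 + (- 15309 / 8) * b ^ 2 * w ^ 8 * al * em3 ^ 2 + (- 567 / 8) * b ^ 2 * w ^ 8 * al * em1 * em3 + (- 729 / 16) * a * w ^ 4 * em3 + (81 / 16) * a * w ^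 4 * em1 + (- 729 / 8) * a * w ^ 4 * al * em3 + (81 / 8) * a * w ^ 4 * al * em1 + (- 1215 / 8) * a * b * w ^ 6 * em1 * em3 + (- 1458) * a * b * w ^ 6 * al * em3 ^ 2 + (- 243) * a * b * w ^ 6 * al * em1 * em3 + (- 729 / 16) * a ^ 2 * w ^ 4 * em1 * em3 + (- 2187 / 8) * a ^ 2 * w ^ 4 * al * em3 ^ 2 + (- 729 / 8) * a ^ 2 * w ^ 4 * al * em1 * em3) * cos (w * x) * sin (w * x) ^ 2 + ((125 / 16) * w ^ 4 + (11875 / 16) * b * w ^ 6 * em5 + (2625 / 16) * b * w ^ 6 * em3 + (249375 / 16) * b ^ 2 * w ^ 8 * em3 * em5 + (1875 / 16) * a * w ^ 4 * em5 + (1125 / 16) * a * w ^ 4 * em3 + (73125 / 8) * a * b * w ^ 6 * em3 * em5 + (16875 / 16) * a ^ 2 * w ^ 4 * em3 * em5) * cos (w * x) * sin (w * x) ^ 4 + ((- 27 / 16) * w ^ 4 + (9 / 2) * w ^ 4 * al + (567 / 16) * b * w ^ 6 * em3 + (- 27 / 16) * b * w ^ 6 * em1 + (621 / 8) * b * w ^ 6 * al * em3 + (- 9 / 8) * b * w ^ 6 * al * em1 + (567 / 16) * b ^ 2 * w ^ 8 * em1 * em3 + (5103 / 8) * b ^ 2 * w ^ 8 * al * em3 ^ 2 + (189 / 8) * b ^ 2 * w ^ 8 * al * em1 * em3 + (243 / 16) * a * w ^ 4 * em3 + (- 27 / 16) * a * w ^ 4 * em1 + (243 / 8) * a * w ^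 4 * al * em3 + (- 27 / 8) * a * w ^ 4 * al * em1 + (405 / 8) * a * b * w ^ 6 * em1 * em3 + (486) * a * b * w ^ 6 * al * em3 ^ 2 + (81) * a * b * w ^ 6 * al * em1 * em3 + (243 / 16) * a ^ 2 * w ^ 4 * em1 * em3 + (729 / 8) * a ^ 2 * w ^ 4 * al * em3 ^ 2 + (243 / 8) * a ^ 2 * w ^ 4 * al * em1 * em3) * cos (w * x) ^ 3 + ((- 125 / 8) * w ^ 4 + (- 11875 / 8) * b * w ^ 6 * em5 + (- 2625 / 8) * b * w ^ 6 * em3 + (- 249375 / 8) * b ^ 2 * w ^ 8 * em3 * em5 + (- 1875 / 8) * a * w ^ 4 * em5 + (- 1125 / 8) * a * w ^ 4 * em3 + (- 73125 / 4) * a * b * w ^ 6 * em3 * em5 + (- 16875 / 8) * a ^ 2 * w ^ 4 * em3 * em5) * cos (w * x) ^ 3 * sin (w * x) ^ 2 + ((25 / 16) * w ^ 4 + (2375 / 16) * b * w ^ 6 * em5 + (525 / 16) * b * w ^ 6 * em3 + (49875 / 16) * b ^ 2 * w ^ 8 * em3 * em5 + (375 / 16) * a * w ^ 4 * em5 + (225 / 16) * a * w ^ 4 * em3 + (14625 / 8) * a * b * w ^ 6 * em3 * em5 + (3375 / 16) * a ^ 2 * w ^ 4 * em3 * em5) * cos (w * x) ^ 5.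
Lemma d_fn4_0 x : is_derive fn4_0 x (fn4_1 x).
Proof. unfold fn4_0, fn4_1. dtac. Qed.
Lemma d_fn4_1 x : is_derive fn4_1 x (fn4_2 x).
Proof. unfold fn4_1, fn4_2. dtac. Qed.
Definition fn5_0 (x : R) : R := ((7 / 4) * w ^ 2 + (- 1 / 2) * w ^ 2 * al ^ 2 + (1 / 4) * b * w ^ 4 * em1 + (- 3 / 2) * b * w ^ 4 * al * em1 + (1 / 2) * b * w ^ 4 * al ^ 2 * em1 + (3 / 4) * a * w ^ 2 * em1 + (- 3) * a * w ^ 2 * al * em1 + (3 / 2) * a * w ^ 2 * al ^ 2 * em1) * cos (w * x) + ((9 / 8) * w ^ 2 + (- 3) * w ^ 2 * al + (189 / 8) * b * w ^ 4 * em3 + (9 / 2) * b * w ^ 4 * al * em3 + (81 / 8) * a * w ^ 2 * em3) * cos (w * x) * sin (w * x) ^ 2 + ((5 / 8) * w ^ 2 + (- 475 / 8) * b * w ^ 4 * em5 + (- 75 / 8) * a * w ^ 2 * em5) * cos (w * x) * sin (w * x) ^ 4 + ((- 3 / 8) * w ^ 2 + (1) * w ^ 2 * al + (- 63 / 8) * b * w ^ 4 * em3 + (- 3 / 2) * b * w ^ 4 * al * em3 + (- 27 / 8) * a * w ^ 2 * em3) * cos (w * x) ^ 3 + ((- 5 / 4) * w ^ 2 + (475 / 4) * b * w ^ 4 * em5 + (75 / 4) * a * w ^ 2 * em5) * cos (w * x) ^ 3 * sin (w * x) ^ 2 + ((1 / 8) * w ^ 2 + (- 95 / 8) * b * w ^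 4 * em5 + (- 15 / 8) * a * w ^ 2 * em5) * cos (w * x) ^ 5.
Definition fn5_1 (x : R) : R := ((- 7 / 4) * w ^ 3 + (1 / 2) * w ^ 3 * al ^ 2 + (- 1 / 4) * b * w ^ 5 * em1 + (3 / 2) * b * w ^ 5 * al * em1 + (- 1 / 2) * b * w ^ 5 * al ^ 2 * em1 + (- 3 / 4) * a * w ^ 3 * em1 + (3) * a * w ^ 3 * al * em1 + (- 3 / 2) * a * w ^ 3 * al ^ 2 * em1) * sin (w * x) + ((- 9 / 8) * w ^ 3 + (3) * w ^ 3 * al + (- 189 / 8) * b * w ^ 5 * em3 + (- 9 / 2) * b * w ^ 5 * al * em3 + (- 81 / 8) * a * w ^ 3 * em3) * sin (w * x) ^ 3 + ((- 5 / 8) * w ^ 3 + (475 / 8) * b * w ^ 5 * em5 + (75 / 8) * a * w ^ 3 * em5) * sin (w * x) ^ 5 + ((27 / 8) * w ^ 3 + (- 9) * w ^ 3 * al + (567 / 8) * b * w ^ 5 * em3 + (27 / 2) * b * w ^ 5 * al * em3 + (243 / 8) * a * w ^ 3 * em3) * cos (w * x) ^ 2 * sin (w * x) + ((25 / 4) * w ^ 3 + (- 2375 / 4) * b * w ^ 5 * em5 + (- 375 / 4) * a * w ^ 3 * em5) * cos (w * x) ^ 2 * sin (w * x) ^ 3 + ((- 25 / 8) * w ^ 3 + (2375 / 8) * b * w ^ 5 * em5 + (375 / 8) * a * w ^ 3 * em5) * cos (w * x) ^ 4 * sin (w * x).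
Definition fn5_2 (x : R) : R := ((- 7 / 4) * w ^ 4 + (1 / 2) * w ^ 4 * al ^ 2 + (- 1 / 4) * b * w ^ 6 * em1 + (3 / 2) * b * w ^ 6 * al * em1 + (- 1 / 2) * b * w ^ 6 * al ^ 2 * em1 + (- 3 / 4) * a * w ^ 4 * em1 + (3) * a * w ^ 4 * al * em1 + (- 3 / 2) * a * w ^ 4 * al ^ 2 * em1) * cos (w * x) + ((- 81 / 8) * w ^ 4 + (27) * w ^ 4 * al + (- 1701 / 8) * b * w ^ 6 * em3 + (- 81 / 2) * b * w ^ 6 * al * em3 + (- 729 / 8) * a * w ^ 4 * em3) * cos (w * x) * sin (w * x) ^ 2 + ((- 125 / 8) * w ^ 4 + (11875 / 8) * b * w ^ 6 * em5 + (1875 / 8) * a * w ^ 4 * em5) * cos (w * x) * sin (w * x) ^ 4 + ((27 / 8) * w ^ 4 + (- 9) * w ^ 4 * al + (567 / 8) * b * w ^ 6 * em3 + (27 / 2) * b * w ^ 6 * al * em3 + (243 / 8) * a * w ^ 4 * em3) * cos (w * x) ^ 3 + ((125 / 4) * w ^ 4 + (- 11875 / 4) * b * w ^ 6 * em5 + (- 1875 / 4) * a * w ^ 4 * em5) * cos (w * x) ^ 3 * sin (w * x) ^ 2 + ((- 25 / 8) * w ^ 4 + (2375 / 8) * b * w ^ 6 * em5 + (375 / 8) * a * w ^ 4 * em5) * cos (w * x) ^ 5.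
Lemma d_fn5_0 x : is_derive fn5_0 x (fn5_1 x).
Proof. unfold fn5_0, fn5_1. dtac. Qed.
Lemma d_fn5_1 x : is_derive fn5_1 x (fn5_2 x).
Proof. unfold fn5_1, fn5_2. dtac. Qed.
Definition fc_0 (x : R) : R := ((- 1) * w * al) * sin (w * x) + ((1) * w) * sin (w * x) ^ 3 + ((3) * w) * cos (w * x) ^ 2 * sin (w * x).
Definition fc_1 (x : R) : R := ((- 1) * w ^ 2 * al) * cos (w * x) + ((- 3) * w ^ 2) * cos (w * x) * sin (w * x) ^ 2 + ((3) * w ^ 2) * cos (w * x) ^ 3.
Definition fc_2 (x : R) : R := ((1) * w ^ 3 * al) * sin (w * x) + ((3) * w ^ 3) * sin (w * x) ^ 3 + ((- 15) * w ^ 3) * cos (w * x) ^ 2 * sin (w * x).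
Definition fc_3 (x : R) : R := ((1) * w ^ 4 * al) * cos (w * x) + ((39) * w ^ 4) * cos (w * x) * sin (w * x) ^ 2 + ((- 15) * w ^ 4) * cos (w * x) ^ 3.
Lemma d_fc_0 x : is_derive fc_0 x (fc_1 x).
Proof. unfold fc_0, fc_1. dtac. Qed.
Lemma d_fc_1 x : is_derive fc_1 x (fc_2 x).
Proof. unfold fc_1, fc_2. dtac. Qed.
Lemma d_fc_2 x : is_derive fc_2 x (fc_3 x).
Proof. unfold fc_2, fc_3. dtac. Qed.
Definition fz_0 (x : R) : R := 0.
Definition fz_1 (x : R) : R := 0.
Definition fz_2 (x : R) : R := 0.
Lemma d_fz_0 x : is_derive fz_0 x (fz_1 x).
Proof. unfold fz_0, fz_1. dtac. Qed.
Lemma d_fz_1 x : is_derive fz_1 x (fz_2 x).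
Proof. unfold fz_1, fz_2. dtac. Qed.
Definition fbun1_0 (x : R) : R := ((- 16) * b * w ^ 4 * al * em2 + (- 12) * a * w ^ 2 * al * em2) * cos (w * x) ^ 3 + ((240) * b * w ^ 4 * em4 + (60) * a * w ^ 2 * em4) * cos (w * x) ^ 3 * sin (w * x) ^ 2 + ((- 48) * b * w ^ 4 * em4 + (- 12) * a * w ^ 2 * em4) * cos (w * x) ^ 5.
Definition fbun1_1 (x : R) : R := ((48) * b * w ^ 5 * al * em2 + (36) * a * w ^ 3 * al * em2) * cos (w * x) ^ 2 * sin (w * x) + ((- 720) * b * w ^ 5 * em4 + (- 180) * a * w ^ 3 * em4) * cos (w * x) ^ 2 * sin (w * x) ^ 3 + ((720) * b * w ^ 5 * em4 + (180) * a * w ^ 3 * em4) * cos (w * x) ^ 4 * sin (w * x).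
Definition fbun1_2 (x : R) : R := ((- 96) * b * w ^ 6 * al * em2 + (- 72) * a * w ^ 4 * al * em2) * cos (w * x) * sin (w * x) ^ 2 + ((1440) * b * w ^ 6 * em4 + (360) * a * w ^ 4 * em4) * cos (w * x) * sin (w * x) ^ 4 + ((48) * b * w ^ 6 * al * em2 + (36) * a * w ^ 4 * al * em2) * cos (w * x) ^ 3 + ((- 5040) * b * w ^ 6 * em4 + (- 1260) * a * w ^ 4 * em4) * cos (w * x) ^ 3 * sin (w * x) ^ 2 + ((720) * b * w ^ 6 * em4 + (180) * a * w ^ 4 * em4) * cos (w * x) ^ 5.
Lemma d_fbun1_0 x : is_derive fbun1_0 x (fbun1_1 x).
Proof. unfold fbun1_0, fbun1_1. dtac. Qed.
Lemma d_fbun1_1 x : is_derive fbun1_1 x (fbun1_2 x).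
Proof. unfold fbun1_1, fbun1_2. dtac. Qed.
Definition fbvn3_0 (x : R) : R := ((- 3 / 4) * w ^ 2 * al + (1 / 2) * w ^ 2 * al ^ 2 + (- 3 / 4) * b * w ^ 4 * al * em1 + (- 1 / 2) * b * w ^ 4 * al ^ 2 * em1 + (- 3 / 4) * a * w ^ 2 * al * em1 + (- 3 / 2) * a * w ^ 2 * al ^ 2 * em1) * cos (w * x) + ((- 9 / 4) * w ^ 2 + (15 / 4) * w ^ 2 * al + (- 9 / 4) * b * w ^ 4 * em1 + (189 / 4) * b * w ^ 4 * al * em3 + (- 3 / 2) * b * w ^ 4 * al * em1 + (- 9 / 4) * a * w ^ 2 * em1 + (81 / 4) * a * w ^ 2 * al * em3 + (- 9 / 2) * a * w ^ 2 * al * em1) * cos (w * x) * sin (w * x) ^ 2 + ((- 5 / 4) * w ^ 2 + (- 105 / 4) * b * w ^ 4 * em3 + (- 45 / 4) * a * w ^ 2 * em3) * cos (w * x) * sin (w * x) ^ 4 + ((- 3 / 4) * w ^ 2 + (- 1 / 4) * w ^ 2 * al + (- 3 / 4) * b * w ^ 4 * em1 + (- 63 / 4) * b * w ^ 4 * al * em3 + (- 1 / 2) * b * w ^ 4 * al * em1 + (- 3 / 4) * a * w ^ 2 * em1 + (- 27 / 4) * a * w ^ 2 * al * em3 + (- 3 / 2) * a * w ^ 2 * al * em1) * cos (w * x) ^ 3 + ((- 3 / 4) * w ^ 2 + (- 63 / 4) * b * w ^ 4 * em3 + (- 27 / 4) * a * w ^ 2 * em3) * cos (w * x) ^ 5.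
Definition fbvn3_1 (x : R) : R := ((3 / 4) * w ^ 3 * al + (- 1 / 2) * w ^ 3 * al ^ 2 + (3 / 4) * b * w ^ 5 * al * em1 + (1 / 2) * b * w ^ 5 * al ^ 2 * em1 + (3 / 4) * a * w ^ 3 * al * em1 + (3 / 2) * a * w ^ 3 * al ^ 2 * em1) * sin (w * x) + ((9 / 4) * w ^ 3 + (- 15 / 4) * w ^ 3 * al + (9 / 4) * b * w ^ 5 * em1 + (- 189 / 4) * b * w ^ 5 * al * em3 + (3 / 2) * b * w ^ 5 * al * em1 + (9 / 4) * a * w ^ 3 * em1 + (- 81 / 4) * a * w ^ 3 * al * em3 + (9 / 2) * a * w ^ 3 * al * em1) * sin (w * x) ^ 3 + ((5 / 4) * w ^ 3 + (105 / 4) * b * w ^ 5 * em3 + (45 / 4) * a * w ^ 3 * em3) * sin (w * x) ^ 5 + ((- 9 / 4) * w ^ 3 + (33 / 4) * w ^ 3 * al + (- 9 / 4) * b * w ^ 5 * em1 + (567 / 4) * b * w ^ 5 * al * em3 + (- 3 / 2) * b * w ^ 5 * al * em1 + (- 9 / 4) * a * w ^ 3 * em1 + (243 / 4) * a * w ^ 3 * al * em3 + (- 9 / 2) * a * w ^ 3 * al * em1) * cos (w * x) ^ 2 * sin (w * x) + ((- 5) * w ^ 3 + (- 105) * b * w ^ 5 * em3 + (- 45) * a * w ^ 3 * em3) * cos (w * x) ^ 2 * sin (w * x) ^ 3 + ((15 / 4) * w ^ 3 + (315 / 4) * b * w ^ 5 * em3 + (135 / 4) * a * w ^ 3 * em3)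 * cos (w * x) ^ 4 * sin (w * x).
Definition fbvn3_2 (x : R) : R := ((3 / 4) * w ^ 4 * al + (- 1 / 2) * w ^ 4 * al ^ 2 + (3 / 4) * b * w ^ 6 * al * em1 + (1 / 2) * b * w ^ 6 * al ^ 2 * em1 + (3 / 4) * a * w ^ 4 * al * em1 + (3 / 2) * a * w ^ 4 * al ^ 2 * em1) * cos (w * x) + ((45 / 4) * w ^ 4 + (- 111 / 4) * w ^ 4 * al + (45 / 4) * b * w ^ 6 * em1 + (- 1701 / 4) * b * w ^ 6 * al * em3 + (15 / 2) * b * w ^ 6 * al * em1 + (45 / 4) * a * w ^ 4 * em1 + (- 729 / 4) * a * w ^ 4 * al * em3 + (45 / 2) * a * w ^ 4 * al * em1) * cos (w * x) * sin (w * x) ^ 2 + ((65 / 4) * w ^ 4 + (1365 / 4) * b * w ^ 6 * em3 + (585 / 4) * a * w ^ 4 * em3) * cos (w * x) * sin (w * x) ^ 4 + ((- 9 / 4) * w ^ 4 + (33 / 4) * w ^ 4 * al + (- 9 / 4) * b * w ^ 6 * em1 + (567 / 4) * b * w ^ 6 * al * em3 + (- 3 / 2) * b * w ^ 6 * al * em1 + (- 9 / 4) * a * w ^ 4 * em1 + (243 / 4) * a * w ^ 4 * al * em3 + (- 9 / 2) * a * w ^ 4 * al * em1) * cos (w * x) ^ 3 + ((- 30) * w ^ 4 + (- 630) * b * w ^ 6 * em3 + (- 270) * a * w ^ 4 * em3) * cos (w * x) ^ 3 * sin (w * x) ^ 2 + ((15 / 4) * w ^ 4 + (315 / 4) * b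 * w ^ 6 * em3 + (135 / 4) * a * w ^ 4 * em3) * cos (w * x) ^ 5.
Lemma d_fbvn3_0 x : is_derive fbvn3_0 x (fbvn3_1 x).
Proof. unfold fbvn3_0, fbvn3_1. dtac. Qed.
Lemma d_fbvn3_1 x : is_derive fbvn3_1 x (fbvn3_2 x).
Proof. unfold fbvn3_1, fbvn3_2. dtac. Qed.
Definition fbcv_0 (x : R) : R := ((- 1) * w ^ 2 * al ^ 2) * cos (w * x) + ((- 6) * w ^ 2 * al) * cos (w * x) * sin (w * x) ^ 2 + ((7) * w ^ 2) * cos (w * x) * sin (w * x) ^ 4 + ((2) * w ^ 2 * al) * cos (w * x) ^ 3 + ((6) * w ^ 2) * cos (w * x) ^ 3 * sin (w * x) ^ 2 + ((3) * w ^ 2) * cos (w * x) ^ 5.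
Definition fbcv_1 (x : R) : R := ((1) * w ^ 3 * al ^ 2) * sin (w * x) + ((6) * w ^ 3 * al) * sin (w * x) ^ 3 + ((- 7) * w ^ 3) * sin (w * x) ^ 5 + ((- 18) * w ^ 3 * al) * cos (w * x) ^ 2 * sin (w * x) + ((10) * w ^ 3) * cos (w * x) ^ 2 * sin (w * x) ^ 3 + ((- 3) * w ^ 3) * cos (w * x) ^ 4 * sin (w * x).
Definition fbcv_2 (x : R) : R := ((1) * w ^ 4 * al ^ 2) * cos (w * x) + ((54) * w ^ 4 * al) * cos (w * x) * sin (w * x) ^ 2 + ((- 55) * w ^ 4) * cos (w * x) * sin (w * x) ^ 4 + ((- 18) * w ^ 4 * al) * cos (w * x) ^ 3 + ((42) * w ^ 4) * cos (w * x) ^ 3 * sin (w * x) ^ 2 + ((- 3) * w ^ 4) * cos (w * x) ^ 5.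
Lemma d_fbcv_0 x : is_derive fbcv_0 x (fbcv_1 x).
Proof. unfold fbcv_0, fbcv_1. dtac. Qed.
Lemma d_fbcv_1 x : is_derive fbcv_1 x (fbcv_2 x).
Proof. unfold fbcv_1, fbcv_2. dtac. Qed.
Lemma cond_1 x : 2 * (a * fn1_0 x - b * fn1_2 x) = (a * fz_0 x - b * fz_2 x)
   - (2 * fv_1 x * (a * fv_0 x - b * fv_2 x) + fv_0 x * (a * fv_1 x - b * fv_3 x))
   - (2 * fv_1 x * (a * fv_0 x - b * fv_2 x) + fv_0 x * (a * fv_1 x - b * fv_3 x)).
Proof.
  unfold fn1_0, fn1_2, fz_0, fz_2, fv_1, fv_0, fv_2, fv_1, fv_3, fv_1, fv_0, fv_2, fv_1, fv_3.
  apply Rminus_diag_uniq.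
  transitivity ((sin (w * x) ^ 2 + cos (w * x) ^ 2 - 1) * (((96) * b * w ^ 3 + (- 1536) * b ^ 2 * w ^ 5 * em4 + (24) * a * w + (- 480) * a * b * w ^ 3 * em4 + (- 24) * a ^ 2 * w * em4) * cos (w * x) * sin (w * x))).
  - unfold_e. field. nz.
  - rewrite sin2cos2. ring.
Qed.
Lemma cond_2 x : 2 * (a * fn2_0 x - b * fn2_2 x) = (a * fbun1_0 x - b * fbun1_2 x)
   - (2 * fn1_1 x * (a * fu_0 x - b * fu_2 x) + fn1_0 x * (a * fu_1 x - b * fu_3 x))
   - (2 * fu_1 x * (a * fn1_0 x - b * fn1_2 x) + fu_0 x * (a * fn1_1 x - b * fn1_3 x)).
Proof.
  unfold fn2_0, fn2_2, fbun1_0, fbun1_2, fn1_1, fu_0, fu_2, fu_1, fu_3, fu_1, fn1_0, fn1_2, fn1_1, fn1_3.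
  apply Rminus_diag_uniq.
  transitivity ((sin (w * x) ^ 2 + cos (w * x) ^ 2 - 1) * (((2448) * b ^ 2 * w ^ 6 * em4 + (- 228) * b ^ 2 * w ^ 6 * al * em2 + (- 78750) * b ^ 3 * w ^ 8 * em4 * em5 + (6318) * b ^ 3 * w ^ 8 * em3 * em4 + (2268) * b ^ 3 * w ^ 8 * al * em2 * em3 + (900) * a * b * w ^ 4 * em4 + (- 255) * a * b * w ^ 4 * al * em2 + (- 68175 / 2) * a * b ^ 2 * w ^ 6 * em4 * em5 + (7479 / 2) * a * b ^ 2 * w ^ 6 * em3 * em4 + (2925) * a * b ^ 2 * w ^ 6 * al * em2 * em3 + (72) * a ^ 2 * w ^ 2 * em4 + (- 63) * a ^ 2 * w ^ 2 * al * em2 + (- 4050) * a ^ 2 * b * w ^ 4 * em4 * em5 + (702) * a ^ 2 * b * w ^ 4 * em3 * em4 + (1026) * a ^ 2 * b * w ^ 4 * al * em2 * em3 + (- 225 / 2) * a ^ 3 * w ^ 2 * em4 * em5 + (81 / 2) * a ^ 3 * w ^ 2 * em3 * em4 + (81) * a ^ 3 * w ^ 2 * al * em2 * em3) * cos (w * x) + ((1638) * b ^ 2 * w ^ 6 * em4 + (- 78750) * b ^ 3 * w ^ 8 * em4 * em5 + (1215 / 2) * a * b * w ^ 4 * em4 + (- 68175 / 2) * a * b ^ 2 * w ^ 6 * em4 * em5 + (99 / 2) * a ^ 2 * w ^ 2 * em4 + (- 4050) * a ^ 2 * b * w ^ 4 * em4 * em5 + (- 225 / 2) * a ^ 3 *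 w ^ 2 * em4 * em5) * cos (w * x) * sin (w * x) ^ 2 + ((- 8946) * b ^ 2 * w ^ 6 * em4 + (236250) * b ^ 3 * w ^ 8 * em4 * em5 + (- 7005 / 2) * a * b * w ^ 4 * em4 + (204525 / 2) * a * b ^ 2 * w ^ 6 * em4 * em5 + (- 633 / 2) * a ^ 2 * w ^ 2 * em4 + (12150) * a ^ 2 * b * w ^ 4 * em4 * em5 + (675 / 2) * a ^ 3 * w ^ 2 * em4 * em5) * cos (w * x) ^ 3)).
  - unfold_e. field. nz.
  - rewrite sin2cos2. ring.
Qed.
Lemma cond_3 x : 2 * (a * fn3_0 x - b * fn3_2 x) = (a * fc_0 x - b * fc_2 x)
   - (2 * fv_1 x * (a * fu_0 x - b * fu_2 x) + fv_0 x * (a * fu_1 x - b * fu_3 x))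
   - (2 * fu_1 x * (a * fv_0 x - b * fv_2 x) + fu_0 x * (a * fv_1 x - b * fv_3 x)).
Proof.
  unfold fn3_0, fn3_2, fc_0, fc_2, fv_1, fu_0, fu_2, fu_1, fu_3, fu_1, fv_0, fv_2, fv_1, fv_3.
  apply Rminus_diag_uniq.
  transitivity ((sin (w * x) ^ 2 + cos (w * x) ^ 2 - 1) * (((15 / 2) * b * w ^ 3 + (- 189 / 2) * b ^ 2 * w ^ 5 * em3 + (3 / 2) * a * w + (- 51) * a * b * w ^ 3 * em3 + (- 9 / 2) * a ^ 2 * w * em3) * sin (w * x))).
  - unfold_e. field. nz.
  - rewrite sin2cos2. ring.
Qed.
Lemma cond_4 x : 2 * (a * fn4_0 x - b * fn4_2 x) = (a * fbvn3_0 x - b * fbvn3_2 x)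
   - (2 * fn3_1 x * (a * fv_0 x - b * fv_2 x) + fn3_0 x * (a * fv_1 x - b * fv_3 x))
   - (2 * fv_1 x * (a * fn3_0 x - b * fn3_2 x) + fv_0 x * (a * fn3_1 x - b * fn3_3 x)).
Proof.
  unfold fn4_0, fn4_2, fbvn3_0, fbvn3_2, fn3_1, fv_0, fv_2, fv_1, fv_3, fv_1, fn3_0, fn3_2, fn3_1, fn3_3.
  apply Rminus_diag_uniq.
  transitivity ((sin (w * x) ^ 2 + cos (w * x) ^ 2 - 1) * (((149 / 4) * b * w ^ 4 + (- 9 / 2) * b * w ^ 4 * al + (- 11875 / 8) * b ^ 2 * w ^ 6 * em5 + (1491) * b ^ 2 * w ^ 6 * em3 + (- 189 / 8) * b ^ 2 * w ^ 6 * em1 + (- 1539 / 4) * b ^ 2 * w ^ 6 * al * em3 + (- 63 / 4) * b ^ 2 * w ^ 6 * al * em1 + (- 249375 / 8) * b ^ 3 * w ^ 8 * em3 * em5 + (1701 / 8) * b ^ 3 * w ^ 8 * em1 * em3 + (15309 / 4) * b ^ 3 * w ^ 8 * al * em3 ^ 2 + (567 / 4) * b ^ 3 * w ^ 8 * al * em1 * em3 + (1 / 4) * a * w ^ 2 + (- 1175 / 4) * a * b * w ^ 4 * em5 + (1761 / 2) * a * b * w ^ 4 * em3 + (- 135 / 4) * a * b * w ^ 4 * em1 + (- 639 / 2) * a * b * w ^ 4 * al * em3 + (- 54) * a * b * w ^ 4 * al * em1 + (- 156225 / 8) * a * b ^ 2 * w ^ 6 * em3 * em5 + (2619 / 8)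 * a * b ^ 2 * w ^ 6 * em1 * em3 + (13365 / 4) * a * b ^ 2 * w ^ 6 * al * em3 ^ 2 + (2007 / 4) * a * b ^ 2 * w ^ 6 * al * em1 * em3 + (- 75 / 8) * a ^ 2 * w ^ 2 * em5 + (207 / 2) * a ^ 2 * w ^ 2 * em3 + (- 81 / 8) * a ^ 2 * w ^ 2 * em1 + (- 243 / 4) * a ^ 2 * w ^ 2 * al * em3 + (- 81 / 4) * a ^ 2 * w ^ 2 * al * em1 + (- 22725 / 8) * a ^ 2 * b * w ^ 4 * em3 * em5 + (999 / 8) * a ^ 2 * b * w ^ 4 * em1 * em3 + (3483 / 4) * a ^ 2 * b * w ^ 4 * al * em3 ^ 2 + (945 / 4) * a ^ 2 * b * w ^ 4 * al * em1 * em3 + (- 675 / 8) * a ^ 3 * w ^ 2 * em3 * em5 + (81 / 8) * a ^ 3 * w ^ 2 * em1 * em3 + (243 / 4) * a ^ 3 * w ^ 2 * al * em3 ^ 2 + (81 / 4) * a ^ 3 * w ^ 2 * al * em1 * em3) * cos (w * x) + ((487 / 8) * b * w ^ 4 + (- 11875 / 8) * b ^ 2 * w ^ 6 * em5 + (10227 / 8) * b ^ 2 * w ^ 6 * em3 + (- 249375 / 8) * b ^ 3 * w ^ 8 * em3 * em5 + (83 / 8) * a * w ^ 2 + (- 1175 / 4) * a * b * w ^ 4 * em5 + (3063 / 4) * a * b * w ^ 4 * em3 + (- 156225 / 8) * a * b ^ 2 * w ^ 6 * em3 * em5 + (- 75 / 8) * a ^ 2 * w ^ 2 * em5 + (747 /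 8) * a ^ 2 * w ^ 2 * em3 + (- 22725 / 8) * a ^ 2 * b * w ^ 4 * em3 * em5 + (- 675 / 8) * a ^ 3 * w ^ 2 * em3 * em5) * cos (w * x) * sin (w * x) ^ 2 + ((- 1413 / 8) * b * w ^ 4 + (35625 / 8) * b ^ 2 * w ^ 6 * em5 + (- 29673 / 8) * b ^ 2 * w ^ 6 * em3 + (748125 / 8) * b ^ 3 * w ^ 8 * em3 * em5 + (- 217 / 8) * a * w ^ 2 + (3525 / 4) * a * b * w ^ 4 * em5 + (- 8637 / 4) * a * b * w ^ 4 * em3 + (468675 / 8) * a * b ^ 2 * w ^ 6 * em3 * em5 + (225 / 8) * a ^ 2 * w ^ 2 * em5 + (- 1953 / 8) * a ^ 2 * w ^ 2 * em3 + (68175 / 8) * a ^ 2 * b * w ^ 4 * em3 * em5 + (2025 / 8) * a ^ 3 * w ^ 2 * em3 * em5) * cos (w * x) ^ 3)).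
  - unfold_e. field. nz.
  - rewrite sin2cos2. ring.
Qed.
Lemma cond_5 x : 2 * (a * fn5_0 x - b * fn5_2 x) = (a * fbcv_0 x - b * fbcv_2 x)
   - (2 * fv_1 x * (a * fc_0 x - b * fc_2 x) + fv_0 x * (a * fc_1 x - b * fc_3 x))
   - (2 * fc_1 x * (a * fv_0 x - b * fv_2 x) + fc_0 x * (a * fv_1 x - b * fv_3 x)).
Proof.
  unfold fn5_0, fn5_2, fbcv_0, fbcv_2, fv_1, fc_0, fc_2, fc_1, fc_3, fc_1, fv_0, fv_2, fv_1, fv_3.
  apply Rminus_diag_uniq.
  transitivity ((sin (w * x) ^ 2 + cos (w * x) ^ 2 - 1) * (((135 / 2) * b * w ^ 4 + (- 6) * b * w ^ 4 * al + (- 11875 / 4) * b ^ 2 * w ^ 6 * em5 + (1701 / 4) * b ^ 2 * w ^ 6 * em3 + (81) * b ^ 2 * w ^ 6 * al * em3 + (- 13 / 2) * a * w ^ 2 + (6) * a * w ^ 2 * al + (- 1175 / 2) * a * b * w ^ 4 * em5 + (459 / 2) * a * b * w ^ 4 * em3 + (9) * a * b * w ^ 4 * al * em3 + (- 75 / 4) * a ^ 2 * w ^ 2 * em5 + (81 / 4) * a ^ 2 * w ^ 2 * em3) * cos (w * x) + ((189 / 4) * b * w ^ 4 + (- 11875 / 4) * b ^ 2 * w ^ 6 * em5 + (- 35 / 4) * a * w ^ 2 + (- 1175 / 2) * a * b * w ^ 4 * em5 + (- 75 / 4) * a ^ 2 * w ^ 2 * em5) * cos (w * x) * sin (w * x)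 ^ 2 + ((- 1351 / 4) * b * w ^ 4 + (35625 / 4) * b ^ 2 * w ^ 6 * em5 + (- 215 / 4) * a * w ^ 2 + (3525 / 2) * a * b * w ^ 4 * em5 + (225 / 4) * a ^ 2 * w ^ 2 * em5) * cos (w * x) ^ 3)).
  - unfold_e. field. nz.
  - rewrite sin2cos2. ring.
Qed.
Definition K0 := ((- 7 / 16) * b * w ^ 4 + (1 / 8) * b * w ^ 4 * al ^ 2 + (105 / 32) * b ^ 2 * w ^ 6 * em3 + (3 / 32) * b ^ 2 * w ^ 6 * em1 + (- 3) * b ^ 2 * w ^ 6 * al * em2 + (3 / 2) * b ^ 2 * w ^ 6 * al * em1 + (- 1 / 4) * b ^ 2 * w ^ 6 * al ^ 2 * em1 + (147 / 32) * b ^ 3 * w ^ 8 * em1 * em3 + (- 9 / 32) * b ^ 3 * w ^ 8 * em1 ^ 2 + (- 3) * b ^ 3 * w ^ 8 * al * em1 * em2 + (1 / 8) * b ^ 3 * w ^ 8 * al ^ 2 * em1 ^ 2 + (- 7 / 16) * a * w ^ 2 + (1 / 8) * a * w ^ 2 * al ^ 2 + (75 / 16) * a * b * w ^ 4 * em3 + (- 3 / 16) * a * b * w ^ 4 * em1 + (- 21 / 4) * a * b * w ^ 4 * al * em2 + (9 / 2) * a * b * w ^ 4 * al * em1 + (- 1) * a * b * w ^ 4 * al ^ 2 * em1 + (273 / 32) * a * b ^ 2 * w ^ 6 * em1 * em3 + (- 27 / 32) * a * b ^ 2 * w ^ 6 * em1 ^ 2 + (- 33 / 4) * a * b ^ 2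 * w ^ 6 * al * em1 * em2 + (7 / 8) * a * b ^ 2 * w ^ 6 * al ^ 2 * em1 ^ 2 + (45 / 32) * a ^ 2 * w ^ 2 * em3 + (- 9 / 32) * a ^ 2 * w ^ 2 * em1 + (- 9 / 4) * a ^ 2 * w ^ 2 * al * em2 + (3) * a ^ 2 * w ^ 2 * al * em1 + (- 3 / 4) * a ^ 2 * w ^ 2 * al ^ 2 * em1 + (153 / 32) * a ^ 2 * b * w ^ 4 * em1 * em3 + (- 27 / 32) * a ^ 2 * b * w ^ 4 * em1 ^ 2 + (- 15 / 2) * a ^ 2 * b * w ^ 4 * al * em1 * em2 + (15 / 8) * a ^ 2 * b * w ^ 4 * al ^ 2 * em1 ^ 2 + (27 / 32) * a ^ 3 * w ^ 2 * em1 * em3 + (- 9 / 32) * a ^ 3 * w ^ 2 * em1 ^ 2 + (- 9 / 4) * a ^ 3 * w ^ 2 * al * em1 * em2 + (9 / 8) * a ^ 3 * w ^ 2 * al ^ 2 * em1 ^ 2).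
Definition FF (x : R) : R := ((23 / 32) * b * w ^ 4 * iw + (- 3 / 4) * b * w ^ 4 * al * iw + (- 1 / 8) * b * w ^ 4 * al ^ 2 * iw + (- 45 / 2) * b ^ 2 * w ^ 6 * iw * em4 + (231 / 16) * b ^ 2 * w ^ 6 * iw * em3 + (- 3 / 8) * b ^ 2 * w ^ 6 * iw * em1 + (243 / 16) * b ^ 2 * w ^ 6 * al * iw * em3 + (- 27 / 16) * b ^ 2 * w ^ 6 * al * iw * em1 + (1 / 4) * b ^ 2 * w ^ 6 * al ^ 2 * iw * em1 + (- 351 / 2) * b ^ 3 * w ^ 8 * iw * em3 * em4 + (21 / 16) * b ^ 3 * w ^ 8 * iw * em1 * em3 + (9 / 32) * b ^ 3 * w ^ 8 * iw * em1 ^ 2 + (1701 / 16) * b ^ 3 * w ^ 8 * al * iw * em3 ^ 2 + (- 63) * b ^ 3 * w ^ 8 * al * iw * em2 * em3 + (63 / 16) * b ^ 3 * w ^ 8 * al * iw * em1 * em3 + (3) * b ^ 3 * w ^ 8 * al * iw * em1 * em2 + (- 1 / 8) * b ^ 3 * w ^ 8 * al ^ 2 * iw * em1 ^ 2 + (- 11 / 32) * a * w ^ 2 * iw + (- 1 / 4) * a * w ^ 2 * al * iw + (1 / 8) * a * w ^ 2 * al ^ 2 * iw + (- 105 / 8) * a * b * w ^ 4 * iw * em4 + (123 / 8) * a * b * w ^ 4 * iw * em3 + (81 / 8) * a * b * w ^ 4 * al * iw * em3 + (- 4) * a * b * w ^ 4 * al * iw * em2 + (- 17 / 8) * a * b *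 w ^ 4 * al * iw * em1 + (1 / 2) * a * b * w ^ 4 * al ^ 2 * iw * em1 + (- 1143 / 8) * a * b ^ 2 * w ^ 6 * iw * em3 * em4 + (177 / 16) * a * b ^ 2 * w ^ 6 * iw * em1 * em3 + (9 / 32) * a * b ^ 2 * w ^ 6 * iw * em1 ^ 2 + (1863 / 16) * a * b ^ 2 * w ^ 6 * al * iw * em3 ^ 2 + (- 381 / 4) * a * b ^ 2 * w ^ 6 * al * iw * em2 * em3 + (237 / 16) * a * b ^ 2 * w ^ 6 * al * iw * em1 * em3 + (9 / 4) * a * b ^ 2 * w ^ 6 * al * iw * em1 * em2 + (- 5 / 8) * a * b ^ 2 * w ^ 6 * al ^ 2 * iw * em1 ^ 2 + (- 15 / 8) * a ^ 2 * w ^ 2 * iw * em4 + (63 / 16) * a ^ 2 * w ^ 2 * iw * em3 + (- 3 / 8) * a ^ 2 * w ^ 2 * iw * em1 + (27 / 16) * a ^ 2 * w ^ 2 * al * iw * em3 + (- 3) * a ^ 2 * w ^ 2 * al * iw * em2 + (45 / 16) * a ^ 2 * w ^ 2 * al * iw * em1 + (- 3 / 4) * a ^ 2 * w ^ 2 * al ^ 2 * iw * em1 + (- 153 / 4) * a ^ 2 * b * w ^ 4 * iw * em3 * em4 + (135 / 16) * a ^ 2 * b * w ^ 4 * iw * em1 * em3 + (- 9 / 32) * a ^ 2 * b * w ^ 4 * iw * em1 ^ 2 + (675 / 16) * a ^ 2 * b * w ^ 4 * al * iw * em3 ^ 2 + (- 45) * a ^ 2 * b * w ^ 4 * al * iw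 * em2 * em3 + (153 / 16) * a ^ 2 * b * w ^ 4 * al * iw * em1 * em3 + (- 3) * a ^ 2 * b * w ^ 4 * al * iw * em1 * em2 + (- 3 / 8) * a ^ 2 * b * w ^ 4 * al ^ 2 * iw * em1 ^ 2 + (- 27 / 8) * a ^ 3 * w ^ 2 * iw * em3 * em4 + (27 / 16) * a ^ 3 * w ^ 2 * iw * em1 * em3 + (- 9 / 32) * a ^ 3 * w ^ 2 * iw * em1 ^ 2 + (81 / 16) * a ^ 3 * w ^ 2 * al * iw * em3 ^ 2 + (- 27 / 4) * a ^ 3 * w ^ 2 * al * iw * em2 * em3 + (27 / 16) * a ^ 3 * w ^ 2 * al * iw * em1 * em3 + (- 9 / 4) * a ^ 3 * w ^ 2 * al * iw * em1 * em2 + (9 / 8) * a ^ 3 * w ^ 2 * al ^ 2 * iw * em1 ^ 2) * cos (w * x) * sin (w * x) + ((7 / 16) * b * w ^ 4 * iw + (- 3 / 4) * b * w ^ 4 * al * iw + (- 1425 / 32) * b ^ 2 * w ^ 6 * iw * em5 + (231 / 16) * b ^ 2 * w ^ 6 * iw * em3 + (- 9 / 32) * b ^ 2 * w ^ 6 * iw * em1 + (243 / 16) * b ^ 2 * w ^ 6 * al * iw * em3 + (- 3) * b ^ 2 * w ^ 6 * al * iw * em2 + (- 3 / 16) * b ^ 2 * w ^ 6 * al * iw * em1 + (1575 / 2) * b ^ 3 * w ^ 8 * iw * em4 * em5 + (- 9975 / 32) * b ^ 3 * w ^ 8 * iw * em3 * em5 + (- 351 / 2) * b ^ 3 * w ^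 8 * iw * em3 * em4 + (189 / 32) * b ^ 3 * w ^ 8 * iw * em1 * em3 + (1701 / 16) * b ^ 3 * w ^ 8 * al * iw * em3 ^ 2 + (- 63) * b ^ 3 * w ^ 8 * al * iw * em2 * em3 + (63 / 16) * b ^ 3 * w ^ 8 * al * iw * em1 * em3 + (- 1 / 16) * a * w ^ 2 * iw + (1 / 4) * a * w ^ 2 * al * iw + (- 255 / 16) * a * b * w ^ 4 * iw * em5 + (12) * a * b * w ^ 4 * iw * em4 + (- 3 / 8) * a * b * w ^ 4 * iw * em3 + (- 3 / 16) * a * b * w ^ 4 * iw * em1 + (- 5 / 4) * a * b * w ^ 4 * al * iw * em2 + (- 1 / 2) * a * b * w ^ 4 * al * iw * em1 + (3735 / 8) * a * b ^ 2 * w ^ 6 * iw * em4 * em5 + (- 7845 / 32) * a * b ^ 2 * w ^ 6 * iw * em3 * em5 + (- 207 / 8) * a * b ^ 2 * w ^ 6 * iw * em3 * em4 + (207 / 32) * a * b ^ 2 * w ^ 6 * iw * em1 * em3 + (729 / 16) * a * b ^ 2 * w ^ 6 * al * iw * em3 ^ 2 + (- 213 / 4) * a * b ^ 2 * w ^ 6 * al * iw * em2 * em3 + (195 / 16) * a * b ^ 2 * w ^ 6 * al * iw * em1 * em3 + (- 45 / 32) * a ^ 2 * w ^ 2 * iw * em5 + (3) * a ^ 2 * w ^ 2 * iw * em4 + (- 45 / 16) * a ^ 2 * w ^ 2 * iw * em3 + (3 / 32) * a ^ 2 * w ^ 2 * iw * em1 + (- 27 / 16) * a ^ 2 * w ^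 2 * al * iw * em3 + (3 / 4) * a ^ 2 * w ^ 2 * al * iw * em2 + (3 / 16) * a ^ 2 * w ^ 2 * al * iw * em1 + (90) * a ^ 2 * b * w ^ 4 * iw * em4 * em5 + (- 1845 / 32) * a ^ 2 * b * w ^ 4 * iw * em3 * em5 + (18) * a ^ 2 * b * w ^ 4 * iw * em3 * em4 + (- 9 / 32) * a ^ 2 * b * w ^ 4 * iw * em1 * em3 + (- 189 / 16) * a ^ 2 * b * w ^ 4 * al * iw * em3 ^ 2 + (9 / 2) * a ^ 2 * b * w ^ 4 * al * iw * em2 * em3 + (9 / 16) * a ^ 2 * b * w ^ 4 * al * iw * em1 * em3 + (45 / 8) * a ^ 3 * w ^ 2 * iw * em4 * em5 + (- 135 / 32) * a ^ 3 * w ^ 2 * iw * em3 * em5 + (27 / 8) * a ^ 3 * w ^ 2 * iw * em3 * em4 + (- 27 / 32) * a ^ 3 * w ^ 2 * iw * em1 * em3 + (- 81 / 16) * a ^ 3 * w ^ 2 * al * iw * em3 ^ 2 + (27 / 4) * a ^ 3 * w ^ 2 * al * iw * em2 * em3 + (- 27 / 16) * a ^ 3 * w ^ 2 * al * iw * em1 * em3) * cos (w * x) * sin (w * x) ^ 3 + ((5 / 32) * b * w ^ 4 * iw + (- 1425 / 32) * b ^ 2 * w ^ 6 * iw * em5 + (45 / 2) * b ^ 2 * w ^ 6 * iw * em4 + (- 105 / 32) * b ^ 2 * w ^ 6 * iw * em3 + (1575 / 2) * b ^ 3 * w ^ 8 * iw * em4 * em5 + (- 9975 / 32) * b ^ 3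 * w ^ 8 * iw * em3 * em5 + (- 1 / 32) * a * w ^ 2 * iw + (15 / 8) * a * b * w ^ 4 * iw * em5 + (9 / 8) * a * b * w ^ 4 * iw * em4 + (- 3 / 4) * a * b * w ^ 4 * iw * em3 + (1215 / 8) * a * b ^ 2 * w ^ 6 * iw * em4 * em5 + (- 3855 / 32) * a * b ^ 2 * w ^ 6 * iw * em3 * em5 + (45 / 32) * a ^ 2 * w ^ 2 * iw * em5 + (- 9 / 8) * a ^ 2 * w ^ 2 * iw * em4 + (9 / 32) * a ^ 2 * w ^ 2 * iw * em3 + (- 135 / 4) * a ^ 2 * b * w ^ 4 * iw * em4 * em5 + (495 / 32) * a ^ 2 * b * w ^ 4 * iw * em3 * em5 + (- 45 / 8) * a ^ 3 * w ^ 2 * iw * em4 * em5 + (135 / 32) * a ^ 3 * w ^ 2 * iw * em3 * em5) * cos (w * x) * sin (w * x) ^ 5 + ((- 7 / 16) * b * w ^ 4 * iw + (3 / 4) * b * w ^ 4 * al * iw + (1425 / 32) * b ^ 2 * w ^ 6 * iw * em5 + (- 231 / 16) * b ^ 2 * w ^ 6 * iw * em3 + (9 / 32) * b ^ 2 * w ^ 6 * iw * em1 + (- 243 / 16) * b ^ 2 * w ^ 6 * al * iw * em3 + (3) * b ^ 2 * w ^ 6 * al * iw * em2 + (3 / 16) * b ^ 2 * w ^ 6 * al * iw * em1 + (- 1575 / 2) * b ^ 3 * w ^ 8 * iw * em4 * em5 + (9975 / 32) * b ^ 3 * w ^ 8 * iw * em3 * em5 + (351 / 2) * b ^ 3 *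 w ^ 8 * iw * em3 * em4 + (- 189 / 32) * b ^ 3 * w ^ 8 * iw * em1 * em3 + (- 1701 / 16) * b ^ 3 * w ^ 8 * al * iw * em3 ^ 2 + (63) * b ^ 3 * w ^ 8 * al * iw * em2 * em3 + (- 63 / 16) * b ^ 3 * w ^ 8 * al * iw * em1 * em3 + (1 / 16) * a * w ^ 2 * iw + (- 1 / 4) * a * w ^ 2 * al * iw + (255 / 16) * a * b * w ^ 4 * iw * em5 + (- 12) * a * b * w ^ 4 * iw * em4 + (3 / 8) * a * b * w ^ 4 * iw * em3 + (3 / 16) * a * b * w ^ 4 * iw * em1 + (5 / 4) * a * b * w ^ 4 * al * iw * em2 + (1 / 2) * a * b * w ^ 4 * al * iw * em1 + (- 3735 / 8) * a * b ^ 2 * w ^ 6 * iw * em4 * em5 + (7845 / 32) * a * b ^ 2 * w ^ 6 * iw * em3 * em5 + (207 / 8) * a * b ^ 2 * w ^ 6 * iw * em3 * em4 + (- 207 / 32) * a * b ^ 2 * w ^ 6 * iw * em1 * em3 + (- 729 / 16) * a * b ^ 2 * w ^ 6 * al * iw * em3 ^ 2 + (213 / 4) * a * b ^ 2 * w ^ 6 * al * iw * em2 * em3 + (- 195 / 16) * a * b ^ 2 * w ^ 6 * al * iw * em1 * em3 + (45 / 32) * a ^ 2 * w ^ 2 * iw * em5 + (- 3) * a ^ 2 * w ^ 2 * iw * em4 + (45 / 16) * a ^ 2 * w ^ 2 * iw * em3 + (- 3 / 32) * a ^ 2 * w ^ 2 * iw * em1 + (27 / 16) * a ^ 2 * w ^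 2 * al * iw * em3 + (- 3 / 4) * a ^ 2 * w ^ 2 * al * iw * em2 + (- 3 / 16) * a ^ 2 * w ^ 2 * al * iw * em1 + (- 90) * a ^ 2 * b * w ^ 4 * iw * em4 * em5 + (1845 / 32) * a ^ 2 * b * w ^ 4 * iw * em3 * em5 + (- 18) * a ^ 2 * b * w ^ 4 * iw * em3 * em4 + (9 / 32) * a ^ 2 * b * w ^ 4 * iw * em1 * em3 + (189 / 16) * a ^ 2 * b * w ^ 4 * al * iw * em3 ^ 2 + (- 9 / 2) * a ^ 2 * b * w ^ 4 * al * iw * em2 * em3 + (- 9 / 16) * a ^ 2 * b * w ^ 4 * al * iw * em1 * em3 + (- 45 / 8) * a ^ 3 * w ^ 2 * iw * em4 * em5 + (135 / 32) * a ^ 3 * w ^ 2 * iw * em3 * em5 + (- 27 / 8) * a ^ 3 * w ^ 2 * iw * em3 * em4 + (27 / 32) * a ^ 3 * w ^ 2 * iw * em1 * em3 + (81 / 16) * a ^ 3 * w ^ 2 * al * iw * em3 ^ 2 + (- 27 / 4) * a ^ 3 * w ^ 2 * al * iw * em2 * em3 + (27 / 16) * a ^ 3 * w ^ 2 * al * iw * em1 * em3) * cos (w * x) ^ 3 * sin (w * x) + ((- 25 / 48) * b * w ^ 4 * iw + (2375 / 16) * b ^ 2 * w ^ 6 * iw * em5 + (- 75) * b ^ 2 * w ^ 6 * iw * em4 + (175 / 16) * b ^ 2 * w ^ 6 * iw * em3 + (- 2625) * b ^ 3 * w ^ 8 * iw * em4 * em5 + (16625 / 16) * b ^ 3 * w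 ^ 8 * iw * em3 * em5 + (5 / 48) * a * w ^ 2 * iw + (- 25 / 4) * a * b * w ^ 4 * iw * em5 + (- 15 / 4) * a * b * w ^ 4 * iw * em4 + (5 / 2) * a * b * w ^ 4 * iw * em3 + (- 2025 / 4) * a * b ^ 2 * w ^ 6 * iw * em4 * em5 + (6425 / 16) * a * b ^ 2 * w ^ 6 * iw * em3 * em5 + (- 75 / 16) * a ^ 2 * w ^ 2 * iw * em5 + (15 / 4) * a ^ 2 * w ^ 2 * iw * em4 + (- 15 / 16) * a ^ 2 * w ^ 2 * iw * em3 + (225 / 2) * a ^ 2 * b * w ^ 4 * iw * em4 * em5 + (- 825 / 16) * a ^ 2 * b * w ^ 4 * iw * em3 * em5 + (75 / 4) * a ^ 3 * w ^ 2 * iw * em4 * em5 + (- 225 / 16) * a ^ 3 * w ^ 2 * iw * em3 * em5) * cos (w * x) ^ 3 * sin (w * x) ^ 3 + ((5 / 32) * b * w ^ 4 * iw + (- 1425 / 32) * b ^ 2 * w ^ 6 * iw * em5 + (45 / 2) * b ^ 2 * w ^ 6 * iw * em4 + (- 105 / 32) * b ^ 2 * w ^ 6 * iw * em3 + (1575 / 2) * b ^ 3 * w ^ 8 * iw * em4 * em5 + (- 9975 / 32) * b ^ 3 * w ^ 8 * iw * em3 * em5 + (- 1 / 32) * a * w ^ 2 * iw + (15 / 8) * a * b * w ^ 4 * iw * em5 + (9 / 8) * a * b * w ^ 4 * iw * em4 + (- 3 / 4) * a * b * w ^ 4 * iw * em3 + (1215 / 8) * a * b ^ 2 * w ^ 6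 * iw * em4 * em5 + (- 3855 / 32) * a * b ^ 2 * w ^ 6 * iw * em3 * em5 + (45 / 32) * a ^ 2 * w ^ 2 * iw * em5 + (- 9 / 8) * a ^ 2 * w ^ 2 * iw * em4 + (9 / 32) * a ^ 2 * w ^ 2 * iw * em3 + (- 135 / 4) * a ^ 2 * b * w ^ 4 * iw * em4 * em5 + (495 / 32) * a ^ 2 * b * w ^ 4 * iw * em3 * em5 + (- 45 / 8) * a ^ 3 * w ^ 2 * iw * em4 * em5 + (135 / 32) * a ^ 3 * w ^ 2 * iw * em3 * em5) * cos (w * x) ^ 5 * sin (w * x).
Lemma dHH x : is_derive (fun y => K0 * y + FF y) x
  (a * (fn2_0 x - fn4_0 x - fn5_0 x) * fu_0 x + b * (fn2_1 x - fn4_1 x - fn5_1 x) * fu_1 x).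
Proof.
  unfold FF. auto_derive; [easy|]. unfold fn2_0, fn4_0, fn5_0, fu_0, fn2_1, fn4_1, fn5_1, fu_1.
  match goal with |- ?A = ?B => change (@eq R A B) end.
  apply Rminus_diag_uniq.
  transitivity ((sin (w * x) ^ 2 + cos (w * x) ^ 2 - 1) * (((7 / 4) * b * w ^ 4 + (- 3 / 2) * b * w ^ 4 * al + (- 1 / 4) * b * w ^ 4 * al ^ 2 + (- 21 / 16) * b * w ^ 5 * iw + (3 / 2) * b * w ^ 5 * al * iw + (1 / 8) * b * w ^ 5 * al ^ 2 * iw + (- 1425 / 16) * b ^ 2 * w ^ 6 * em5 + (357 / 16) * b ^ 2 * w ^ 6 * em3 + (- 3 / 4) * b ^ 2 * w ^ 6 * em1 + (243 / 8) * b ^ 2 * w ^ 6 * al * em3 + (- 27 / 8) * b ^ 2 * w ^ 6 * al * em1 + (1 / 2) * b ^ 2 * w ^ 6 * al ^ 2 * em1 + (1425 / 16) * b ^ 2 * w ^ 7 * iw * em5 + (- 819 / 32) * b ^ 2 * w ^ 7 * iw * em3 + (21 / 32) * b ^ 2 * w ^ 7 * iw * em1 + (- 243 / 8) * b ^ 2 * w ^ 7 * al * iw * em3 + (3) * b ^ 2 * w ^ 7 * al * iw * em2 + (15 / 8) * b ^ 2 * w ^ 7 * al * iw * em1 + (- 1 / 4) * b ^ 2 * w ^ 7 * al ^ 2 * iw * em1 + (1575) * b ^ 3 * w ^ 8 * em4 * em5 + (- 9975 / 16) * b ^ 3 * w ^ 8 * em3 * em5 + (- 351) * b ^ 3 *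 w ^ 8 * em3 * em4 + (21 / 8) * b ^ 3 * w ^ 8 * em1 * em3 + (9 / 16) * b ^ 3 * w ^ 8 * em1 ^ 2 + (1701 / 8) * b ^ 3 * w ^ 8 * al * em3 ^ 2 + (- 126) * b ^ 3 * w ^ 8 * al * em2 * em3 + (63 / 8) * b ^ 3 * w ^ 8 * al * em1 * em3 + (6) * b ^ 3 * w ^ 8 * al * em1 * em2 + (- 1 / 4) * b ^ 3 * w ^ 8 * al ^ 2 * em1 ^ 2 + (- 1575) * b ^ 3 * w ^ 9 * iw * em4 * em5 + (9975 / 16) * b ^ 3 * w ^ 9 * iw * em3 * em5 + (351) * b ^ 3 * w ^ 9 * iw * em3 * em4 + (- 231 / 32) * b ^ 3 * w ^ 9 * iw * em1 * em3 + (- 9 / 32) * b ^ 3 * w ^ 9 * iw * em1 ^ 2 + (- 1701 / 8) * b ^ 3 * w ^ 9 * al * iw * em3 ^ 2 + (126) * b ^ 3 * w ^ 9 * al * iw * em2 * em3 + (- 63 / 8) * b ^ 3 * w ^ 9 * al * iw * em1 * em3 + (- 3) * b ^ 3 * w ^ 9 * al * iw * em1 * em2 + (1 / 8) * b ^ 3 * w ^ 9 * al ^ 2 * iw * em1 ^ 2 + (7 / 16) * a * w ^ 3 * iw + (- 1 / 8) * a * w ^ 3 * al ^ 2 * iw + (- 225 / 16) * a * b * w ^ 4 * em5 + (153 / 16) * a * b * w ^ 4 * em3 + (81 / 8) * a * b * w ^ 4 * al * em3 + (- 57 / 8) * a * b * w ^ 4 * al * em1 + (3 / 2) * a * b * w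 ^ 4 * al ^ 2 * em1 + (225 / 16) * a * b * w ^ 5 * iw * em5 + (- 57 / 4) * a * b * w ^ 5 * iw * em3 + (3 / 16) * a * b * w ^ 5 * iw * em1 + (- 81 / 8) * a * b * w ^ 5 * al * iw * em3 + (21 / 4) * a * b * w ^ 5 * al * iw * em2 + (21 / 8) * a * b * w ^ 5 * al * iw * em1 + (- 1 / 2) * a * b * w ^ 5 * al ^ 2 * iw * em1 + (2475 / 4) * a * b ^ 2 * w ^ 6 * em4 * em5 + (- 2925 / 8) * a * b ^ 2 * w ^ 6 * em3 * em5 + (- 675 / 4) * a * b ^ 2 * w ^ 6 * em3 * em4 + (9) * a * b ^ 2 * w ^ 6 * em1 * em3 + (9 / 8) * a * b ^ 2 * w ^ 6 * em1 ^ 2 + (162) * a * b ^ 2 * w ^ 6 * al * em3 ^ 2 + (- 297 / 2) * a * b ^ 2 * w ^ 6 * al * em2 * em3 + (27) * a * b ^ 2 * w ^ 6 * al * em1 * em3 + (21 / 2) * a * b ^ 2 * w ^ 6 * al * em1 * em2 + (- 3 / 2) * a * b ^ 2 * w ^ 6 * al ^ 2 * em1 ^ 2 + (- 2475 / 4) * a * b ^ 2 * w ^ 7 * iw * em4 * em5 + (2925 / 8) * a * b ^ 2 * w ^ 7 * iw * em3 * em5 + (675 / 4) * a * b ^ 2 * w ^ 7 * iw * em3 * em4 + (- 561 / 32) * a * b ^ 2 * w ^ 7 * iw * em1 * em3 + (- 9 / 32) * a * b ^ 2 * w ^ 7 * iw * em1 ^ 2 + (- 162) * a * b ^ 2 *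 w ^ 7 * al * iw * em3 ^ 2 + (297 / 2) * a * b ^ 2 * w ^ 7 * al * iw * em2 * em3 + (- 27) * a * b ^ 2 * w ^ 7 * al * iw * em1 * em3 + (- 9 / 4) * a * b ^ 2 * w ^ 7 * al * iw * em1 * em2 + (5 / 8) * a * b ^ 2 * w ^ 7 * al ^ 2 * iw * em1 ^ 2 + (- 45 / 32) * a ^ 2 * w ^ 3 * iw * em3 + (9 / 32) * a ^ 2 * w ^ 3 * iw * em1 + (9 / 4) * a ^ 2 * w ^ 3 * al * iw * em2 + (- 3) * a ^ 2 * w ^ 3 * al * iw * em1 + (3 / 4) * a ^ 2 * w ^ 3 * al ^ 2 * iw * em1 + (225 / 4) * a ^ 2 * b * w ^ 4 * em4 * em5 + (- 675 / 16) * a ^ 2 * b * w ^ 4 * em3 * em5 + (- 81 / 4) * a ^ 2 * b * w ^ 4 * em3 * em4 + (27 / 8) * a ^ 2 * b * w ^ 4 * em1 * em3 + (9 / 16) * a ^ 2 * b * w ^ 4 * em1 ^ 2 + (243 / 8) * a ^ 2 * b * w ^ 4 * al * em3 ^ 2 + (- 81 / 2) * a ^ 2 * b * w ^ 4 * al * em2 * em3 + (81 / 8) * a ^ 2 * b * w ^ 4 * al * em1 * em3 + (9 / 2) * a ^ 2 * b * w ^ 4 * al * em1 * em2 + (- 9 / 4) * a ^ 2 * b * w ^ 4 * al ^ 2 * em1 ^ 2 + (- 225 / 4) * a ^ 2 * b * w ^ 5 * iw * em4 * em5 + (675 / 16) * a ^ 2 * b * w ^ 5 * iw * em3 * em5 +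 (81 / 4) * a ^ 2 * b * w ^ 5 * iw * em3 * em4 + (- 261 / 32) * a ^ 2 * b * w ^ 5 * iw * em1 * em3 + (9 / 32) * a ^ 2 * b * w ^ 5 * iw * em1 ^ 2 + (- 243 / 8) * a ^ 2 * b * w ^ 5 * al * iw * em3 ^ 2 + (81 / 2) * a ^ 2 * b * w ^ 5 * al * iw * em2 * em3 + (- 81 / 8) * a ^ 2 * b * w ^ 5 * al * iw * em1 * em3 + (3) * a ^ 2 * b * w ^ 5 * al * iw * em1 * em2 + (3 / 8) * a ^ 2 * b * w ^ 5 * al ^ 2 * iw * em1 ^ 2 + (- 27 / 32) * a ^ 3 * w ^ 3 * iw * em1 * em3 + (9 / 32) * a ^ 3 * w ^ 3 * iw * em1 ^ 2 + (9 / 4) * a ^ 3 * w ^ 3 * al * iw * em1 * em2 + (- 9 / 8) * a ^ 3 * w ^ 3 * al ^ 2 * iw * em1 ^ 2) + ((7 / 8) * b * w ^ 4 + (- 3 / 2) * b * w ^ 4 * al + (- 19 / 32) * b * w ^ 5 * iw + (3 / 4) * b * w ^ 5 * al * iw + (- 1425 / 16) * b ^ 2 * w ^ 6 * em5 + (231 / 8) * b ^ 2 * w ^ 6 * em3 + (- 9 / 16) * b ^ 2 * w ^ 6 * em1 + (243 / 8) * b ^ 2 * w ^ 6 * al * em3 + (- 6) * b ^ 2 * w ^ 6 * al * em2 + (- 3 / 8) * b ^ 2 * w ^ 6 * al * em1 + (1425 / 16) * b ^ 2 * w ^ 7 * iw * em5 + (- 45 / 2) * b ^ 2 * w ^ 7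 * iw * em4 + (- 357 / 32) * b ^ 2 * w ^ 7 * iw * em3 + (9 / 32) * b ^ 2 * w ^ 7 * iw * em1 + (- 243 / 16) * b ^ 2 * w ^ 7 * al * iw * em3 + (3) * b ^ 2 * w ^ 7 * al * iw * em2 + (3 / 16) * b ^ 2 * w ^ 7 * al * iw * em1 + (1575) * b ^ 3 * w ^ 8 * em4 * em5 + (- 9975 / 16) * b ^ 3 * w ^ 8 * em3 * em5 + (- 351) * b ^ 3 * w ^ 8 * em3 * em4 + (189 / 16) * b ^ 3 * w ^ 8 * em1 * em3 + (1701 / 8) * b ^ 3 * w ^ 8 * al * em3 ^ 2 + (- 126) * b ^ 3 * w ^ 8 * al * em2 * em3 + (63 / 8) * b ^ 3 * w ^ 8 * al * em1 * em3 + (- 1575) * b ^ 3 * w ^ 9 * iw * em4 * em5 + (9975 / 16) * b ^ 3 * w ^ 9 * iw * em3 * em5 + (351 / 2) * b ^ 3 * w ^ 9 * iw * em3 * em4 + (- 189 / 32) * b ^ 3 * w ^ 9 * iw * em1 * em3 + (- 1701 / 16) * b ^ 3 * w ^ 9 * al * iw * em3 ^ 2 + (63) * b ^ 3 * w ^ 9 * al * iw * em2 * em3 + (- 63 / 16) * b ^ 3 * w ^ 9 * al * iw * em1 * em3 + (3 / 32) * a * w ^ 3 * iw + (- 1 / 4) * a * w ^ 3 * al * iw + (- 225 / 16) * a * b * w ^ 4 * em5 + (99 / 8) * a * b * w ^ 4 * em3 + (- 9 / 16) * a * b * w ^ 4 * em1 + (81 / 8) * a * b * w ^ 4 * al * em3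 + (- 9 / 2) * a * b * w ^ 4 * al * em2 + (- 9 / 8) * a * b * w ^ 4 * al * em1 + (225 / 16) * a * b * w ^ 5 * iw * em5 + (- 105 / 8) * a * b * w ^ 5 * iw * em4 + (9 / 8) * a * b * w ^ 5 * iw * em3 + (3 / 16) * a * b * w ^ 5 * iw * em1 + (5 / 4) * a * b * w ^ 5 * al * iw * em2 + (1 / 2) * a * b * w ^ 5 * al * iw * em1 + (2475 / 4) * a * b ^ 2 * w ^ 6 * em4 * em5 + (- 2925 / 8) * a * b ^ 2 * w ^ 6 * em3 * em5 + (- 675 / 4) * a * b ^ 2 * w ^ 6 * em3 * em4 + (135 / 8) * a * b ^ 2 * w ^ 6 * em1 * em3 + (162) * a * b ^ 2 * w ^ 6 * al * em3 ^ 2 + (- 297 / 2) * a * b ^ 2 * w ^ 6 * al * em2 * em3 + (27) * a * b ^ 2 * w ^ 6 * al * em1 * em3 + (- 2475 / 4) * a * b ^ 2 * w ^ 7 * iw * em4 * em5 + (2925 / 8) * a * b ^ 2 * w ^ 7 * iw * em3 * em5 + (207 / 8) * a * b ^ 2 * w ^ 7 * iw * em3 * em4 + (- 207 / 32) * a * b ^ 2 * w ^ 7 * iw * em1 * em3 + (- 729 / 16) * a * b ^ 2 * w ^ 7 * al * iw * em3 ^ 2 + (213 / 4) * a * b ^ 2 * w ^ 7 * al * iw * em2 * em3 + (- 195 / 16) * a * b ^ 2 * w ^ 7 * al * iw * em1 * em3 + (- 15 / 8) * a ^ 2 * w ^ 3 * iw * em4 + (81 / 32) * a ^ 2 * w ^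 3 * iw * em3 + (- 3 / 32) * a ^ 2 * w ^ 3 * iw * em1 + (27 / 16) * a ^ 2 * w ^ 3 * al * iw * em3 + (- 3 / 4) * a ^ 2 * w ^ 3 * al * iw * em2 + (- 3 / 16) * a ^ 2 * w ^ 3 * al * iw * em1 + (225 / 4) * a ^ 2 * b * w ^ 4 * em4 * em5 + (- 675 / 16) * a ^ 2 * b * w ^ 4 * em3 * em5 + (- 81 / 4) * a ^ 2 * b * w ^ 4 * em3 * em4 + (81 / 16) * a ^ 2 * b * w ^ 4 * em1 * em3 + (243 / 8) * a ^ 2 * b * w ^ 4 * al * em3 ^ 2 + (- 81 / 2) * a ^ 2 * b * w ^ 4 * al * em2 * em3 + (81 / 8) * a ^ 2 * b * w ^ 4 * al * em1 * em3 + (- 225 / 4) * a ^ 2 * b * w ^ 5 * iw * em4 * em5 + (675 / 16) * a ^ 2 * b * w ^ 5 * iw * em3 * em5 + (- 18) * a ^ 2 * b * w ^ 5 * iw * em3 * em4 + (9 / 32) * a ^ 2 * b * w ^ 5 * iw * em1 * em3 + (189 / 16) * a ^ 2 * b * w ^ 5 * al * iw * em3 ^ 2 + (- 9 / 2) * a ^ 2 * b * w ^ 5 * al * iw * em2 * em3 + (- 9 / 16) * a ^ 2 * b * w ^ 5 * al * iw * em1 * em3 + (- 27 / 8) * a ^ 3 * w ^ 3 * iw * em3 * em4 + (27 / 32) * a ^ 3 * w ^ 3 * iw * em1 * em3 + (81 / 16) * a ^ 3 * w ^ 3 * al * iw * em3 ^ 2 + (- 27 / 4) * a ^ 3 * w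 ^ 3 * al * iw * em2 * em3 + (27 / 16) * a ^ 3 * w ^ 3 * al * iw * em1 * em3) * sin (w * x) ^ 2 + ((5 / 16) * b * w ^ 4 + (- 5 / 32) * b * w ^ 5 * iw + (- 1425 / 16) * b ^ 2 * w ^ 6 * em5 + (45) * b ^ 2 * w ^ 6 * em4 + (- 105 / 16) * b ^ 2 * w ^ 6 * em3 + (1425 / 32) * b ^ 2 * w ^ 7 * iw * em5 + (- 45 / 2) * b ^ 2 * w ^ 7 * iw * em4 + (105 / 32) * b ^ 2 * w ^ 7 * iw * em3 + (1575) * b ^ 3 * w ^ 8 * em4 * em5 + (- 9975 / 16) * b ^ 3 * w ^ 8 * em3 * em5 + (- 1575 / 2) * b ^ 3 * w ^ 9 * iw * em4 * em5 + (9975 / 32) * b ^ 3 * w ^ 9 * iw * em3 * em5 + (1 / 32) * a * w ^ 3 * iw + (- 225 / 16) * a * b * w ^ 4 * em5 + (45 / 4) * a * b * w ^ 4 * em4 + (- 45 / 16) * a * b * w ^ 4 * em3 + (- 15 / 8) * a * b * w ^ 5 * iw * em5 + (- 9 / 8) * a * b * w ^ 5 * iw * em4 + (3 / 4) * a * b * w ^ 5 * iw * em3 + (2475 / 4) * a * b ^ 2 * w ^ 6 * em4 * em5 + (- 2925 / 8) * a * b ^ 2 * w ^ 6 * em3 * em5 + (- 1215 / 8) * a * b ^ 2 * w ^ 7 * iw * em4 * em5 + (3855 / 32) * a * b ^ 2 * w ^ 7 * iw * em3 * em5 + (- 45 / 32) * a ^ 2 * w ^ 3 * iw * em5 + (9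 / 8) * a ^ 2 * w ^ 3 * iw * em4 + (- 9 / 32) * a ^ 2 * w ^ 3 * iw * em3 + (225 / 4) * a ^ 2 * b * w ^ 4 * em4 * em5 + (- 675 / 16) * a ^ 2 * b * w ^ 4 * em3 * em5 + (135 / 4) * a ^ 2 * b * w ^ 5 * iw * em4 * em5 + (- 495 / 32) * a ^ 2 * b * w ^ 5 * iw * em3 * em5 + (45 / 8) * a ^ 3 * w ^ 3 * iw * em4 * em5 + (- 135 / 32) * a ^ 3 * w ^ 3 * iw * em3 * em5) * sin (w * x) ^ 4 + ((- 6) * b * w ^ 4 + (6) * b * w ^ 4 * al + (183 / 32) * b * w ^ 5 * iw + (- 21 / 4) * b * w ^ 5 * al * iw + (4275 / 4) * b ^ 2 * w ^ 6 * em5 + (- 360) * b ^ 2 * w ^ 6 * em4 + (- 63) * b ^ 2 * w ^ 6 * em3 + (9 / 4) * b ^ 2 * w ^ 6 * em1 + (- 243 / 2) * b ^ 2 * w ^ 6 * al * em3 + (24) * b ^ 2 * w ^ 6 * al * em2 + (3 / 2) * b ^ 2 * w ^ 6 * al * em1 + (- 4275 / 4) * b ^ 2 * w ^ 7 * iw * em5 + (765 / 2) * b ^ 2 * w ^ 7 * iw * em4 + (1449 / 32) * b ^ 2 * w ^ 7 * iw * em3 + (- 63 / 32) * b ^ 2 * w ^ 7 * iw * em1 + (1701 / 16) * b ^ 2 * w ^ 7 * al * iw * em3 + (- 21) * b ^ 2 * w ^ 7 * al * iw * em2 + (- 21 / 16) * b ^ 2 * w ^ 7 * al * iw * em1 +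 (- 18900) * b ^ 3 * w ^ 8 * em4 * em5 + (29925 / 4) * b ^ 3 * w ^ 8 * em3 * em5 + (1404) * b ^ 3 * w ^ 8 * em3 * em4 + (- 189 / 4) * b ^ 3 * w ^ 8 * em1 * em3 + (- 1701 / 2) * b ^ 3 * w ^ 8 * al * em3 ^ 2 + (504) * b ^ 3 * w ^ 8 * al * em2 * em3 + (- 63 / 2) * b ^ 3 * w ^ 8 * al * em1 * em3 + (18900) * b ^ 3 * w ^ 9 * iw * em4 * em5 + (- 29925 / 4) * b ^ 3 * w ^ 9 * iw * em3 * em5 + (- 2457 / 2) * b ^ 3 * w ^ 9 * iw * em3 * em4 + (1323 / 32) * b ^ 3 * w ^ 9 * iw * em1 * em3 + (11907 / 16) * b ^ 3 * w ^ 9 * al * iw * em3 ^ 2 + (- 441) * b ^ 3 * w ^ 9 * al * iw * em2 * em3 + (441 / 16) * b ^ 3 * w ^ 9 * al * iw * em1 * em3 + (7 / 8) * a * w ^ 2 + (- 3 / 2) * a * w ^ 2 * al + (- 31 / 32) * a * w ^ 3 * iw + (7 / 4) * a * w ^ 3 * al * iw + (1275 / 16) * a * b * w ^ 4 * em5 + (- 90) * a * b * w ^ 4 * em4 + (15 / 8) * a * b * w ^ 4 * em3 + (27 / 16) * a * b * w ^ 4 * em1 + (- 81 / 8) * a * b * w ^ 4 * al * em3 + (12) * a * b * w ^ 4 * al * em2 + (33 / 8) * a * b * w ^ 4 * al * em1 + (- 1275 / 16) * a * b * w ^ 5 * iw * em5 + (825 / 8) * a * b * w ^ 5 * iw * em4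 + (- 123 / 8) * a * b * w ^ 5 * iw * em3 + (- 21 / 16) * a * b * w ^ 5 * iw * em1 + (- 35 / 4) * a * b * w ^ 5 * al * iw * em2 + (- 7 / 2) * a * b * w ^ 5 * al * iw * em1 + (- 5850) * a * b ^ 2 * w ^ 6 * em4 * em5 + (60225 / 16) * a * b ^ 2 * w ^ 6 * em3 * em5 + (324) * a * b ^ 2 * w ^ 6 * em3 * em4 + (- 891 / 16) * a * b ^ 2 * w ^ 6 * em1 * em3 + (- 3483 / 8) * a * b ^ 2 * w ^ 6 * al * em3 ^ 2 + (468) * a * b ^ 2 * w ^ 6 * al * em2 * em3 + (- 801 / 8) * a * b ^ 2 * w ^ 6 * al * em1 * em3 + (5850) * a * b ^ 2 * w ^ 7 * iw * em4 * em5 + (- 60225 / 16) * a * b ^ 2 * w ^ 7 * iw * em3 * em5 + (- 1449 / 8) * a * b ^ 2 * w ^ 7 * iw * em3 * em4 + (1449 / 32) * a * b ^ 2 * w ^ 7 * iw * em1 * em3 + (5103 / 16) * a * b ^ 2 * w ^ 7 * al * iw * em3 ^ 2 + (- 1491 / 4) * a * b ^ 2 * w ^ 7 * al * iw * em2 * em3 + (1365 / 16) * a * b ^ 2 * w ^ 7 * al * iw * em1 * em3 + (- 225 / 16) * a ^ 2 * w ^ 2 * em5 + (99 / 8) * a ^ 2 * w ^ 2 * em3 + (- 9 / 16) * a ^ 2 * w ^ 2 * em1 + (81 / 8) * a ^ 2 * w ^ 2 * al * em3 + (- 9 / 2) * a ^ 2 * w ^ 2 * al * em2 + (- 9 / 8)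 * a ^ 2 * w ^ 2 * al * em1 + (225 / 16) * a ^ 2 * w ^ 3 * iw * em5 + (15 / 8) * a ^ 2 * w ^ 3 * iw * em4 + (- 477 / 32) * a ^ 2 * w ^ 3 * iw * em3 + (21 / 32) * a ^ 2 * w ^ 3 * iw * em1 + (- 189 / 16) * a ^ 2 * w ^ 3 * al * iw * em3 + (21 / 4) * a ^ 2 * w ^ 3 * al * iw * em2 + (21 / 16) * a ^ 2 * w ^ 3 * al * iw * em1 + (- 225 / 4) * a ^ 2 * b * w ^ 4 * em4 * em5 + (1125 / 8) * a ^ 2 * b * w ^ 4 * em3 * em5 + (- 351 / 4) * a ^ 2 * b * w ^ 4 * em3 * em4 + (- 27 / 8) * a ^ 2 * b * w ^ 4 * em1 * em3 + (81 / 2) * a ^ 2 * b * w ^ 4 * al * em3 ^ 2 + (27 / 2) * a ^ 2 * b * w ^ 4 * al * em2 * em3 + (- 27 / 2) * a ^ 2 * b * w ^ 4 * al * em1 * em3 + (225 / 4) * a ^ 2 * b * w ^ 5 * iw * em4 * em5 + (- 1125 / 8) * a ^ 2 * b * w ^ 5 * iw * em3 * em5 + (126) * a ^ 2 * b * w ^ 5 * iw * em3 * em4 + (- 63 / 32) * a ^ 2 * b * w ^ 5 * iw * em1 * em3 + (- 1323 / 16) * a ^ 2 * b * w ^ 5 * al * iw * em3 ^ 2 + (63 / 2) * a ^ 2 * b * w ^ 5 * al * iw * em2 * em3 + (63 / 16) * a ^ 2 * b * w ^ 5 * al * iw * em1 * em3 + (225 / 4) * a ^ 3 * w ^ 2 *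 em4 * em5 + (- 675 / 16) * a ^ 3 * w ^ 2 * em3 * em5 + (- 81 / 4) * a ^ 3 * w ^ 2 * em3 * em4 + (81 / 16) * a ^ 3 * w ^ 2 * em1 * em3 + (243 / 8) * a ^ 3 * w ^ 2 * al * em3 ^ 2 + (- 81 / 2) * a ^ 3 * w ^ 2 * al * em2 * em3 + (81 / 8) * a ^ 3 * w ^ 2 * al * em1 * em3 + (- 225 / 4) * a ^ 3 * w ^ 3 * iw * em4 * em5 + (675 / 16) * a ^ 3 * w ^ 3 * iw * em3 * em5 + (189 / 8) * a ^ 3 * w ^ 3 * iw * em3 * em4 + (- 189 / 32) * a ^ 3 * w ^ 3 * iw * em1 * em3 + (- 567 / 16) * a ^ 3 * w ^ 3 * al * iw * em3 ^ 2 + (189 / 4) * a ^ 3 * w ^ 3 * al * iw * em2 * em3 + (- 189 / 16) * a ^ 3 * w ^ 3 * al * iw * em1 * em3) * cos (w * x) ^ 2 + ((- 55 / 16) * b * w ^ 4 + (5 / 2) * b * w ^ 5 * iw + (15675 / 16) * b ^ 2 * w ^ 6 * em5 + (- 495) * b ^ 2 * w ^ 6 * em4 + (1155 / 16) * b ^ 2 * w ^ 6 * em3 + (- 1425 / 2) * b ^ 2 * w ^ 7 * iw * em5 + (360) * b ^ 2 * w ^ 7 * iw * em4 + (- 105 / 2) * b ^ 2 * w ^ 7 * iw * em3 + (- 17325) * b ^ 3 * w ^ 8 * em4 * em5 + (109725 / 16) * b ^ 3 * w ^ 8 * em3 * em5 + (12600) * b ^ 3 * w ^ 9 * iw * em4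 * em5 + (- 9975 / 2) * b ^ 3 * w ^ 9 * iw * em3 * em5 + (5 / 16) * a * w ^ 2 + (- 1 / 2) * a * w ^ 3 * iw + (525 / 8) * a * b * w ^ 4 * em5 + (- 315 / 4) * a * b * w ^ 4 * em4 + (195 / 8) * a * b * w ^ 4 * em3 + (30) * a * b * w ^ 5 * iw * em5 + (18) * a * b * w ^ 5 * iw * em4 + (- 12) * a * b * w ^ 5 * iw * em3 + (- 20925 / 4) * a * b ^ 2 * w ^ 6 * em4 * em5 + (54375 / 16) * a * b ^ 2 * w ^ 6 * em3 * em5 + (2430) * a * b ^ 2 * w ^ 7 * iw * em4 * em5 + (- 3855 / 2) * a * b ^ 2 * w ^ 7 * iw * em3 * em5 + (- 225 / 16) * a ^ 2 * w ^ 2 * em5 + (45 / 4) * a ^ 2 * w ^ 2 * em4 + (- 45 / 16) * a ^ 2 * w ^ 2 * em3 + (45 / 2) * a ^ 2 * w ^ 3 * iw * em5 + (- 18) * a ^ 2 * w ^ 3 * iw * em4 + (9 / 2) * a ^ 2 * w ^ 3 * iw * em3 + (1575 / 16) * a ^ 2 * b * w ^ 4 * em3 * em5 + (- 540) * a ^ 2 * b * w ^ 5 * iw * em4 * em5 + (495 / 2) * a ^ 2 * b * w ^ 5 * iw * em3 * em5 + (225 / 4) * a ^ 3 * w ^ 2 * em4 * em5 + (- 675 / 16) * a ^ 3 * w ^ 2 * em3 * em5 + (- 90) * a ^ 3 * w ^ 3 * iw * em4 * em5 + (135 / 2) * a ^ 3 * w ^ 3 * iw * em3 * em5) * cos (w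 * x) ^ 2 * sin (w * x) ^ 2 + ((5) * b * w ^ 4 + (- 155 / 32) * b * w ^ 5 * iw + (- 1425) * b ^ 2 * w ^ 6 * em5 + (720) * b ^ 2 * w ^ 6 * em4 + (- 105) * b ^ 2 * w ^ 6 * em3 + (44175 / 32) * b ^ 2 * w ^ 7 * iw * em5 + (- 1395 / 2) * b ^ 2 * w ^ 7 * iw * em4 + (3255 / 32) * b ^ 2 * w ^ 7 * iw * em3 + (25200) * b ^ 3 * w ^ 8 * em4 * em5 + (- 9975) * b ^ 3 * w ^ 8 * em3 * em5 + (- 48825 / 2) * b ^ 3 * w ^ 9 * iw * em4 * em5 + (309225 / 32) * b ^ 3 * w ^ 9 * iw * em3 * em5 + (- 15 / 16) * a * w ^ 2 + (31 / 32) * a * w ^ 3 * iw + (675 / 16) * a * b * w ^ 4 * em5 + (45) * a * b * w ^ 4 * em4 + (- 405 / 16) * a * b * w ^ 4 * em3 + (- 465 / 8) * a * b * w ^ 5 * iw * em5 + (- 279 / 8) * a * b * w ^ 5 * iw * em4 + (93 / 4) * a * b * w ^ 5 * iw * em3 + (5175) * a * b ^ 2 * w ^ 6 * em4 * em5 + (- 63675 / 16) * a * b ^ 2 * w ^ 6 * em3 * em5 + (- 37665 / 8) * a * b ^ 2 * w ^ 7 * iw * em4 * em5 + (119505 / 32) * a * b ^ 2 * w ^ 7 * iw * em3 * em5 + (675 / 16) * a ^ 2 * w ^ 2 * em5 + (- 135 / 4) * a ^ 2 * w ^ 2 * em4 + (135 / 16) * a ^ 2 * w ^ 2 * em3 +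 (- 1395 / 32) * a ^ 2 * w ^ 3 * iw * em5 + (279 / 8) * a ^ 2 * w ^ 3 * iw * em4 + (- 279 / 32) * a ^ 2 * w ^ 3 * iw * em3 + (- 3825 / 4) * a ^ 2 * b * w ^ 4 * em4 * em5 + (3375 / 8) * a ^ 2 * b * w ^ 4 * em3 * em5 + (4185 / 4) * a ^ 2 * b * w ^ 5 * iw * em4 * em5 + (- 15345 / 32) * a ^ 2 * b * w ^ 5 * iw * em3 * em5 + (- 675 / 4) * a ^ 3 * w ^ 2 * em4 * em5 + (2025 / 16) * a ^ 3 * w ^ 2 * em3 * em5 + (1395 / 8) * a ^ 3 * w ^ 3 * iw * em4 * em5 + (- 4185 / 32) * a ^ 3 * w ^ 3 * iw * em3 * em5) * cos (w * x) ^ 4)).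
  - unfold K0. unfold_e. field. nz.
  - rewrite sin2cos2. ring.
Qed.
Lemma K0_closed : K0 * ((a + b*w^2)^2 * (a + 4*(b*w^2)) * (a + 9*(b*w^2))) =
  w^2 * ((5/4*a^5 + 13/2*a^4*(b*w^2) + 15/2*a^3*(b*w^2)^2 + 19/2*a^2*(b*w^2)^3 + 65/4*a*(b*w^2)^4 + 9*(b*w^2)^5)
   + a * (-3/2*a^4 - 27/2*a^3*(b*w^2) + 9/2*a^2*(b*w^2)^2 + 87/2*a*(b*w^2)^3 + 27*(b*w^2)^4) * al
   + a^2 * (1/2*a^3 + 7*a^2*(b*w^2) + 49/2*a*(b*w^2)^2 + 18*(b*w^2)^3) * al^2).
Proof. unfold K0. unfold_e. field. nz. Qed.
Lemma p_fu_0 : periodic1 fu_0.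
Proof. intros x; unfold fu_0; cbv beta; rewrite ?Hcos, ?Hsin; reflexivity. Qed.
Lemma p_fv_0 : periodic1 fv_0.
Proof. intros x; unfold fv_0; cbv beta; rewrite ?Hcos, ?Hsin; reflexivity. Qed.
Lemma p_fn1_0 : periodic1 fn1_0.
Proof. intros x; unfold fn1_0; cbv beta; rewrite ?Hcos, ?Hsin; reflexivity. Qed.
Lemma p_fn2_0 : periodic1 fn2_0.
Proof. intros x; unfold fn2_0; cbv beta; rewrite ?Hcos, ?Hsin; reflexivity. Qed.
Lemma p_fn3_0 : periodic1 fn3_0.
Proof. intros x; unfold fn3_0; cbv beta; rewrite ?Hcos, ?Hsin; reflexivity. Qed.
Lemma p_fn4_0 : periodic1 fn4_0.
Proof. intros x; unfold fn4_0; cbv beta; rewrite ?Hcos, ?Hsin; reflexivity. Qed.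
Lemma p_fn5_0 : periodic1 fn5_0.
Proof. intros x; unfold fn5_0; cbv beta; rewrite ?Hcos, ?Hsin; reflexivity. Qed.
Lemma p_fc_0 : periodic1 fc_0.
Proof. intros x; unfold fc_0; cbv beta; rewrite ?Hcos, ?Hsin; reflexivity. Qed.
Lemma p_fz_0 : periodic1 fz_0.
Proof. intros x; unfold fz_0; cbv beta; rewrite ?Hcos, ?Hsin; reflexivity. Qed.
Lemma p_fbun1_0 : periodic1 fbun1_0.
Proof. intros x; unfold fbun1_0; cbv beta; rewrite ?Hcos, ?Hsin; reflexivity. Qed.
Lemma p_fbvn3_0 : periodic1 fbvn3_0.
Proof. intros x; unfold fbvn3_0; cbv beta; rewrite ?Hcos, ?Hsin; reflexivity. Qed.
Lemma p_fbcv_0 : periodic1 fbcv_0.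
Proof. intros x; unfold fbcv_0; cbv beta; rewrite ?Hcos, ?Hsin; reflexivity. Qed.
Lemma s_fu_0 : smooth fu_0.
Proof. apply (TP_smooth w). unfold fu_0. tp. Qed.
Lemma v_fu_0 : vfS1 fu_0.
Proof. split; [apply p_fu_0 | apply s_fu_0]. Qed.
Lemma s_fv_0 : smooth fv_0.
Proof. apply (TP_smooth w). unfold fv_0. tp. Qed.
Lemma v_fv_0 : vfS1 fv_0.
Proof. split; [apply p_fv_0 | apply s_fv_0]. Qed.
Lemma s_fn1_0 : smooth fn1_0.
Proof. apply (TP_smooth w). unfold fn1_0. tp. Qed.
Lemma v_fn1_0 : vfS1 fn1_0.
Proof. split; [apply p_fn1_0 | apply s_fn1_0]. Qed.
Lemma s_fn2_0 : smooth fn2_0.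
Proof. apply (TP_smooth w). unfold fn2_0. tp. Qed.
Lemma v_fn2_0 : vfS1 fn2_0.
Proof. split; [apply p_fn2_0 | apply s_fn2_0]. Qed.
Lemma s_fn3_0 : smooth fn3_0.
Proof. apply (TP_smooth w). unfold fn3_0. tp. Qed.
Lemma v_fn3_0 : vfS1 fn3_0.
Proof. split; [apply p_fn3_0 | apply s_fn3_0]. Qed.
Lemma s_fn4_0 : smooth fn4_0.
Proof. apply (TP_smooth w). unfold fn4_0. tp. Qed.
Lemma v_fn4_0 : vfS1 fn4_0.
Proof. split; [apply p_fn4_0 | apply s_fn4_0]. Qed.
Lemma s_fn5_0 : smooth fn5_0.
Proof. apply (TP_smooth w). unfold fn5_0. tp. Qed.
Lemma v_fn5_0 : vfS1 fn5_0.
Proof. split; [apply p_fn5_0 | apply s_fn5_0]. Qed.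
Lemma LC1 : is_LC_nabla a b fv_0 fv_0 fn1_0.
Proof.
  apply (LC_ok a b fv_0 fv_1 fv_2 fv_3 fv_0 fv_1 fv_2 fv_3 fn1_0 fn1_1 fn1_2 fz_0 fz_1 fz_2).
  - apply p_fv_0. - apply p_fv_0. - apply v_fn1_0. - apply p_fz_0.
  - apply d_fv_0. - apply d_fv_1. - apply d_fv_2.
  - apply d_fv_0. - apply d_fv_1. - apply d_fv_2.
  - apply d_fn1_0. - apply d_fn1_1.
  - apply d_fz_0. - apply d_fz_1.
  - intros x. unfold fz_0, fv_1, fv_0, fv_1, fv_0. match goal with |- ?A = ?B => change (@eq R A B) end. field.
  - apply cond_1.
Qed.
Lemma LC2 : is_LC_nabla a b fu_0 fn1_0 fn2_0.
Proof.
  apply (LC_ok a b fu_0 fu_1 fu_2 fu_3 fn1_0 fn1_1 fn1_2 fn1_3 fn2_0 fn2_1 fn2_2 fbun1_0 fbun1_1 fbun1_2).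
  - apply p_fu_0. - apply p_fn1_0. - apply v_fn2_0. - apply p_fbun1_0.
  - apply d_fu_0. - apply d_fu_1. - apply d_fu_2.
  - apply d_fn1_0. - apply d_fn1_1. - apply d_fn1_2.
  - apply d_fn2_0. - apply d_fn2_1.
  - apply d_fbun1_0. - apply d_fbun1_1.
  - intros x. unfold fbun1_0, fu_1, fu_0, fn1_1, fn1_0. match goal with |- ?A = ?B => change (@eq R A B) end. field.
  - apply cond_2.
Qed.
Lemma LC3 : is_LC_nabla a b fu_0 fv_0 fn3_0.
Proof.
  apply (LC_ok a b fu_0 fu_1 fu_2 fu_3 fv_0 fv_1 fv_2 fv_3 fn3_0 fn3_1 fn3_2 fc_0 fc_1 fc_2).
  - apply p_fu_0. - apply p_fv_0. - apply v_fn3_0. - apply p_fc_0.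
  - apply d_fu_0. - apply d_fu_1. - apply d_fu_2.
  - apply d_fv_0. - apply d_fv_1. - apply d_fv_2.
  - apply d_fn3_0. - apply d_fn3_1.
  - apply d_fc_0. - apply d_fc_1.
  - intros x. unfold fc_0, fu_1, fu_0, fv_1, fv_0. match goal with |- ?A = ?B => change (@eq R A B) end. field.
  - apply cond_3.
Qed.
Lemma LC4 : is_LC_nabla a b fv_0 fn3_0 fn4_0.
Proof.
  apply (LC_ok a b fv_0 fv_1 fv_2 fv_3 fn3_0 fn3_1 fn3_2 fn3_3 fn4_0 fn4_1 fn4_2 fbvn3_0 fbvn3_1 fbvn3_2).
  - apply p_fv_0. - apply p_fn3_0. - apply v_fn4_0. - apply p_fbvn3_0.
  - apply d_fv_0. - apply d_fv_1. - apply d_fv_2.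
  - apply d_fn3_0. - apply d_fn3_1. - apply d_fn3_2.
  - apply d_fn4_0. - apply d_fn4_1.
  - apply d_fbvn3_0. - apply d_fbvn3_1.
  - intros x. unfold fbvn3_0, fv_1, fv_0, fn3_1, fn3_0. match goal with |- ?A = ?B => change (@eq R A B) end. field.
  - apply cond_4.
Qed.
Lemma LC5 : is_LC_nabla a b fc_0 fv_0 fn5_0.
Proof.
  apply (LC_ok a b fc_0 fc_1 fc_2 fc_3 fv_0 fv_1 fv_2 fv_3 fn5_0 fn5_1 fn5_2 fbcv_0 fbcv_1 fbcv_2).
  - apply p_fc_0. - apply p_fv_0. - apply v_fn5_0. - apply p_fbcv_0.
  - apply d_fc_0. - apply d_fc_1. - apply d_fc_2.
  - apply d_fv_0. - apply d_fv_1. - apply d_fv_2.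
  - apply d_fn5_0. - apply d_fn5_1.
  - apply d_fbcv_0. - apply d_fbcv_1.
  - intros x. unfold fbcv_0, fc_1, fc_0, fv_1, fv_0. match goal with |- ?A = ?B => change (@eq R A B) end. field.
  - apply cond_5.
Qed.
Lemma g_neg t : 10 <= t -> -9/8*t^5 - 83/32*t^4 + 161/16*t^3 + 573/32*t^2 + 61/8*t + 5/4 < 0.
Proof. intros H.
  assert (H1: 0 < t^2) by nra. assert (H2 : 0 < t^3) by nra.
  assert (H3: t^5 = t^3 * t^2) by ring. assert (H4 : t^4 = t^3*t) by ring.
  rewrite H3, H4. nra. Qed.

Hypothesis Hr : 10 * a <= b * w ^ 2.
Hypothesis Hal : al = - 3 * (b * w ^ 2) / (4 * a).

Lemma K0_neg : K0 < 0.
Proof.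
  pose proof K0_closed as E. set (r := b * w ^ 2) in *.
  assert (Hr0 : 0 < r) by lra.
  set (t := r / a).
  assert (Ht : 10 <= t). { unfold t. apply (Rmult_le_reg_r a); auto. unfold Rdiv. rewrite Rmult_assoc, Rinv_l; lra. }
  assert (EN : (5/4*a^5 + 13/2*a^4*r + 15/2*a^3*r^2 + 19/2*a^2*r^3 + 65/4*a*r^4 + 9*r^5)
   + a * (-3/2*a^4 - 27/2*a^3*r + 9/2*a^2*r^2 + 87/2*a*r^3 + 27*r^4) * al
   + a^2 * (1/2*a^3 + 7*a^2*r + 49/2*a*r^2 + 18*r^3) * al^2
   = a^5 * (-9/8*t^5 - 83/32*t^4 + 161/16*t^3 + 573/32*t^2 + 61/8*t + 5/4)).
  { rewrite Hal. unfold t. field. lra. }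
  rewrite EN in E. pose proof (g_neg t Ht) as G.
  assert (Ha5 : 0 < a^5) by (apply pow_lt; lra).
  assert (Hw2 : 0 < w^2) by (apply pow_lt; lra).
  assert (HP : 0 < (a + r)^2 * (a + 4*r) * (a + 9*r)).
  { apply Rmult_lt_0_compat; [apply Rmult_lt_0_compat|]; [apply pow_lt|..]; lra. }
  set (g := -9/8*t^5 - 83/32*t^4 + 161/16*t^3 + 573/32*t^2 + 61/8*t + 5/4) in *.
  assert (Hwa : 0 < w^2 * a^5) by (apply Rmult_lt_0_compat; lra).
  assert (HN : w ^ 2 * (a ^ 5 * g) < 0).
  { rewrite <- Rmult_assoc. nra. }
  rewrite <- E in HN. nra.
Qed.

Lemma dN x : is_derive (fun y => fn2_0 y - fn4_0 y - fn5_0 y) x (fn2_1 x - fn4_1 x - fn5_1 x).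
Proof. apply (is_derive_minus (fun y => fn2_0 y - fn4_0 y)). apply (is_derive_minus fn2_0).
  apply d_fn2_0. apply d_fn4_0. apply d_fn5_0. Qed.

Lemma integral_K0 : H1ip a b (fun x => fn2_0 x - fn4_0 x - fn5_0 x) fu_0 = K0.
Proof.
  unfold H1ip.
  rewrite (RInt_ext _ (fun x => a * (fn2_0 x - fn4_0 x - fn5_0 x) * fu_0 x + b * (fn2_1 x - fn4_1 x - fn5_1 x) * fu_1 x)).
  2: { intros x _. rewrite (is_derive_unique _ _ _ (d_fu_0 x)).
    assert (HD : Derive (fun y : R => fn2_0 y - fn4_0 y - fn5_0 y) x = fn2_1 x - fn4_1 x - fn5_1 x) by (apply is_derive_unique; apply dN).
    rewrite HD. reflexivity. }
  assert (C : forall x, Rmin 0 1 <= x <= Rmax 0 1 -> continuous (fun x => a * (fn2_0 x - fn4_0 x - fn5_0 x) * fu_0 x + b * (fn2_1 x - fn4_1 x - fn5_1 x) * fu_1 x) x).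
  { intros x _. apply (ex_derive_continuous (K:=R_AbsRing) (V:=R_NormedModule)).
    auto_derive; repeat split;
    match goal with
    | |- ex_derive (fun _ => fn2_0 _) ?y => exact (ex_intro _ _ (d_fn2_0 y))
    | |- ex_derive (fun _ => fn2_1 _) ?y => exact (ex_intro _ _ (d_fn2_1 y))
    | |- ex_derive (fun _ => fn4_0 _) ?y => exact (ex_intro _ _ (d_fn4_0 y))
    | |- ex_derive (fun _ => fn4_1 _) ?y => exact (ex_intro _ _ (d_fn4_1 y))
    | |- ex_derive (fun _ => fn5_0 _) ?y => exact (ex_intro _ _ (d_fn5_0 y))
    | |- ex_derive (fun _ => fn5_1 _) ?y => exact (ex_intro _ _ (d_fn5_1 y))
    | |- ex_derive (fun _ => fu_0 _) ?y => exact (ex_intro _ _ (d_fu_0 y))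
    | |- ex_derive (fun _ => fu_1 _) ?y => exact (ex_intro _ _ (d_fu_1 y))
    end. }
  pose proof (is_RInt_derive (fun y => K0 * y + FF y) _ 0 1 (fun x _ => dHH x) C) as I.
  apply is_RInt_unique in I. rewrite I.
  assert (HF : FF 1 = FF 0). { unfold FF. replace 1 with (0 + 1) by ring. rewrite ?Hcos, ?Hsin. reflexivity. }
  change (minus (K0 * 1 + FF 1) (K0 * 0 + FF 0)) with ((K0 * 1 + FF 1) - (K0 * 0 + FF 0)).
  rewrite HF. ring.
Qed.

Lemma brR_fc : brR fu_0 fv_0 = fc_0.
Proof.
  apply FunctionalExtensionality.functional_extensionality. intros x. unfold brR.
  rewrite (is_derive_unique _ _ _ (d_fu_0 x)), (is_derive_unique _ _ _ (d_fv_0 x)).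
  unfold fc_0, fu_0, fu_1, fv_0, fv_1. field.
Qed.

Lemma main_sec : exists (u v : R -> R) (s : R),
    vfS1 u /\ vfS1 v /\ sectional_curvature_is a b u v s /\ s < 0.
Proof.
  exists fu_0, fv_0, (H1ip a b (fun x => fn2_0 x - fn4_0 x - fn5_0 x) fu_0).
  split; [apply v_fu_0|]. split; [apply v_fv_0|]. split.
  - exists fn1_0, fn2_0, fn3_0, fn4_0, fn5_0.
    split; [apply LC1|]. split; [apply LC2|]. split; [apply LC3|]. split; [apply LC4|].
    split; [rewrite brR_fc; apply LC5|]. reflexivity.
  - rewrite integral_K0. apply K0_neg.
Qed.
End Conc.

Theorem theorem6p3 :
  forall a b : R, 0 < a -> 0 < b ->
  exists (u v : R -> R) (s : R),
    vfS1 u /\ vfS1 v /\ sectional_curvature_is a b u v s /\ s < 0.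
Proof.
  intros a b ha hb.
  destruct (INR_archimed b a hb) as [n Hn].
  set (k := S n).
  assert (Hk1 : 1 <= INR k) by (unfold k; rewrite S_INR; pose proof (pos_INR n); lra).
  assert (Hkb : a < INR k * b) by (unfold k; rewrite S_INR; nra).
  set (w := 2 * INR k * PI).
  assert (Hpi : PI > 3) by (pose proof PI2_3_2; lra).
  assert (hw : 0 < w) by (unfold w; nra).
  assert (Hcos : forall x, cos (w * (x + 1)) = cos (w * x)).
  { intros x. unfold w. replace (2 * INR k * PI * (x + 1)) with (2 * INR k * PI * x + 2 * INR k * PI) by ring.
    apply cos_period. }
  assert (Hsin : forall x, sin (w * (x + 1)) = sin (w * x)).
  { intros x. unfold w. replace (2 * INR k * PI * (x + 1)) with (2 * INR k * PI * x + 2 * INR k * PI) by ring.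
    apply sin_period. }
  assert (Hr : 10 * a <= b * w ^ 2).
  { unfold w. assert (INR k * INR k >= INR k) by nra.
    assert (PI * PI > 9) by nra.
    assert (b * (INR k * INR k) >= b * INR k) by nra.
    assert (b * (INR k * INR k) * (PI * PI) >= b * (INR k * INR k) * 9) by nra.
    nra. }
  exact (main_sec a b w (- 3 * (b * w ^ 2) / (4 * a)) ha hb hw Hcos Hsin Hr eq_refl).
Qed.
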